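(* Let $h\ge2$ be an integer and let $\zeta=e^{2\pi i/h}$. For real $t$ and $r$, define the generalized binomial series \[ \big(\mathcal{B}_{t}(x)\big)^r = \sum_{n \geq 0}\binom{tn+r}{n}\frac{r}{tn+r}x^n \] (the left-hand side is notation for this power series; the term for $n=0$ is $1$). Define \[ r_h = \tfrac{1}{2}\,\mathcal{B}_{h+1}\!\Big(\tfrac{1}{2^{h+1}}\Big),\qquad r_j = \zeta^{-j}\,2^{1/h}\,\mathcal{B}_{(h+1)/h}\!\Big(\zeta^j \big(\tfrac{1}{2}\big)^{(h+1)/h}\Big)^{-1/h}\quad (0\le j\le h-1), \] where $\mathcal{B}_{h+1}(x)$ means $(\mathcal{B}_{h+1}(x))^1$, and $2^{1/h}$, $(1/2)^{(h+1)/h}$ denote positive real roots. Then $r_0,\dots,r_h$ are the $h+1$ roots of the polynomial $1-2z+z^{h+1}$, so that $1-2z+z^{h+1}=\prod_{i=0}^h(z-r_i)$, and for every $n\ge0$, \[ [z^n]\frac{1}{1-2z+z^{h+1}} = -\sum_{i = 0}^h \frac{1}{r_i^{\,n+1}}\prod_{\substack{j = 0\\ j \neq i}}^{h}(r_i - r_j)^{-1}. \]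
   Context: Here $[z^n]F(z)$ denotes the coefficient of $z^n$ in the power series expansion of $F$ at $z=0$. The generalized $h$-bonacci numbers, defined by $u_{n+h}=u_{n+h-1}+\cdots+u_n$ with the usual initial values, have generating function $\frac{z}{1-z-\cdots-z^h}=\frac{z(1-z)}{1-2z+z^{h+1}}$, so this gives a Binet-type formula for them. *)

(* Defs.v *)
From Stdlib Require Import Reals Factorial.
From Coquelicot Require Import Coquelicot.
Open Scope R_scope.

Fixpoint falling (a : R) (n : nat) : R :=
  match n with O => 1 | S m => falling a m * (a - INR m) end.

Definition gbinom (a : R) (n : nat) : R := falling a n / INR (fact n).

Definition Bcoef (t r : R) (n : nat) : R :=
  match n with
  | O => 1
  | S _ => gbinom (t * INR n + r) n * r / (t * INR n + r)
  end.

Definition Bterm (t r : R) (x : C) (n : nat) : C := (RtoC (Bcoef t r n) * Cpow x n)%C.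

(* value of a complex series (componentwise real Series; meaningful when convergent) *)
Definition CSeries (a : nat -> C) : C :=
  (Series (fun n => fst (a n)), Series (fun n => snd (a n))).

Definition Bpow (t r : R) (x : C) : C := CSeries (Bterm t r x).

Definition zeta (h : nat) : C := (cos (2 * PI / INR h), sin (2 * PI / INR h)).

Definition root_r (h : nat) (i : nat) : C :=
  if Nat.eqb i h then
    (RtoC (1/2) * Bpow (INR h + 1) 1 (RtoC (1 / 2 ^ (h + 1))))%C
  else
    (/ Cpow (zeta h) i * RtoC (Rpower 2 (1 / INR h)) *
     Bpow ((INR h + 1) / INR h) (- (1 / INR h))
          (Cpow (zeta h) i * RtoC (Rpower (1/2) ((INR h + 1) / INR h))))%C.

Fixpoint csum (f : nat -> C) (N : nat) : C :=
  match N with O => RtoC 0 | S m => (csum f m + f m)%C end.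
Fixpoint cprod (f : nat -> C) (N : nat) : C :=
  match N with O => RtoC 1 | S m => (cprod f m * f m)%C end.

Definition is_expansion_at0 (F : C -> C) (a : nat -> C) : Prop :=
  exists rho : R, 0 < rho /\
    forall z : C, Cmod z < rho -> @is_pseries C_AbsRing C_NormedModule a z (F z).

(* Main.v *)
Require Import Defs.
From Stdlib Require Import Reals Lra Lia Factorial Ranalysis5.
From Coquelicot Require Import Coquelicot.
Open Scope R_scope.

Fixpoint PR (lo : R) (m : nat) : R :=
  match m with O => 1 | S k => PR lo k * (lo + INR k) end.

Definition A (t r : R) (n : nat) : R :=
  match n with
  | O => 1
  | S m => r * PR (t * INR (S m) + r - INR m) m / INR (fact (S m))
  end.

Lemma PR_S_bot lo m : PR lo (S m) = lo * PR (lo + 1) m.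
Proof.
  revert lo; induction m as [|m IH]; intros lo; simpl.
  - ring.
  - simpl in IH. rewrite IH. destruct m; simpl; ring_simplify; try ring.
    all: rewrite ?S_INR; ring.
Qed.

Lemma PR_S_bot' lo m : PR (lo - 1) (S m) = (lo - 1) * PR lo m.
Proof. rewrite PR_S_bot. f_equal. f_equal. ring. Qed.

Lemma INR_fact_pos n : 0 < INR (fact n).
Proof. apply lt_0_INR, lt_O_fact. Qed.

Lemma A_rec t r m : A t r (S m) - A t (r - 1) (S m) = A t (r - 1 + t) m.
Proof.
  destruct m as [|j].
  - simpl. field.
  - unfold A.
    set (L := t * INR (S (S j)) + r - INR (S j)).
    replace (t * INR (S (S j)) + (r - 1) - INR (S j)) with (L - 1) by (unfold L; ring).
    replace (t * INR (S j) + (r - 1 + t) - INR j) with L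
      by (unfold L; rewrite !S_INR; ring).
    rewrite PR_S_bot'.
    change (PR L (S j)) with (PR L j * (L + INR j)).
    change (fact (S (S j))) with (S (S j) * fact (S j))%nat.
    rewrite mult_INR.
    assert (Hf := INR_fact_pos (S j)).
    assert (HL : L = t * (INR j + 2) + r - (INR j + 1)) by (unfold L; rewrite !S_INR; ring).
    rewrite HL. rewrite !S_INR. field. split; [lra|]. pose proof (pos_INR j). lra.
Qed.

Lemma A_0 t k : (0 < k)%nat -> A t 0 k = 0.
Proof. destruct k; [lia|]. intros _. simpl. unfold Rdiv. ring. Qed.

Fixpoint isP (d : nat) (p : R -> R) : Prop :=
  match d with
  | O => exists c, forall r, p r = c
  | S d' => exists q c, isP d' q /\ forall r, p r = r * q r + c
  end.

Lemma isP_ext d p q : isP d p -> (forall r, p r = q r) -> isP d q.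
Proof.
  destruct d; simpl.
  - intros [c Hc] H. exists c. intros r. rewrite <- H. auto.
  - intros [q' [c [H1 H2]]] H. exists q', c. split; auto. intros r; rewrite <- H; auto.
Qed.

Lemma isP_const d c : isP d (fun _ => c).
Proof.
  induction d; simpl.
  - exists c; auto.
  - exists (fun _ => 0), c. split.
    + clear IHd. induction d; simpl. exists 0; auto. exists (fun _ => 0), 0. split; auto. intros; ring.
    + intros; ring.
Qed.

Lemma isP_mono1 d p : isP d p -> isP (S d) p.
Proof.
  revert p; induction d; intros p H.
  - destruct H as [c Hc]. simpl. exists (fun _ => 0), c. split.
    + exists 0; auto.
    + intros r; rewrite Hc; ring.
  - destruct H as [q [c [Hq Hp]]]. exists q, c. split; auto.
Qed.

Lemma isP_mono d e p : (d <= e)%nat -> isP d p -> isP e p.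
Proof.
  intros H; induction H; auto. intros Hp. apply isP_mono1; auto.
Qed.

Lemma isP_plus d p q : isP d p -> isP d q -> isP d (fun r => p r + q r).
Proof.
  revert p q; induction d; intros p q Hp Hq.
  - destruct Hp as [c1 H1]; destruct Hq as [c2 H2]. exists (c1 + c2). intros; rewrite H1, H2; auto.
  - destruct Hp as [p1 [c1 [Hp1 H1]]]; destruct Hq as [q1 [c2 [Hq1 H2]]].
    exists (fun r => p1 r + q1 r), (c1 + c2). split; auto.
    intros; rewrite H1, H2; ring.
Qed.

Lemma isP_scal d p c : isP d p -> isP d (fun r => c * p r).
Proof.
  revert p; induction d; intros p Hp.
  - destruct Hp as [c1 H1]. exists (c * c1). intros; rewrite H1; auto.
  - destruct Hp as [p1 [c1 [Hp1 H1]]].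
    exists (fun r => c * p1 r), (c * c1). split; auto.
    intros; rewrite H1; ring.
Qed.

Lemma isP_mulX d p : isP d p -> isP (S d) (fun r => r * p r).
Proof. intros H. exists p, 0. split; auto. intros; ring. Qed.

Lemma isP_mul_lin d p a : isP d p -> isP (S d) (fun r => (r + a) * p r).
Proof.
  intros H. apply isP_ext with (fun r => r * p r + a * p r).
  - apply isP_plus. apply isP_mulX; auto. apply isP_mono1, isP_scal; auto.
  - intros; ring.
Qed.

Lemma isP_sum d (f : nat -> R -> R) N :
  (forall k, (k <= N)%nat -> isP d (f k)) -> isP d (fun r => sum_f_R0 (fun k => f k r) N).
Proof.
  induction N; intros H; simpl.
  - apply H; lia.
  - apply isP_plus. apply IHN. intros; apply H; lia. apply H; lia.
Qed.

Lemma isP_div d p : isP (S d) p -> forall a, exists q, isP d q /\ forall r, p r = (r - a) * q r + p a.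
Proof.
  revert p; induction d; intros p Hp a.
  - destruct Hp as [q [c [[c0 Hq] Hp]]].
    exists (fun _ => c0). split. exists c0; auto.
    intros r. rewrite !Hp, !Hq. ring.
  - destruct Hp as [q [c [Hq Hp]]].
    destruct (IHd q Hq a) as [q1 [Hq1 Hq1e]].
    exists (fun r => r * q1 r + q a). split.
    + apply isP_plus. apply isP_mulX; auto. apply isP_const.
    + intros r. rewrite !Hp, (Hq1e r). ring.
Qed.

Lemma isP_zero d : forall p a, isP d p -> (forall k : nat, p (a + INR k) = 0) -> forall r, p r = 0.
Proof.
  induction d; intros p a Hp Hz r.
  - destruct Hp as [c Hc]. rewrite Hc. rewrite <- (Hc (a + INR 0)). apply Hz.
  - destruct (isP_div d p Hp a) as [q [Hq Hqe]].
    assert (Hpa : p a = 0) by (rewrite <- (Hz 0%nat); simpl; f_equal; ring).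
    assert (Hq0 : forall r, q r = 0).
    { apply (IHd q (a + 1) Hq). intros k.
      assert (H := Hz (S k)). rewrite Hqe, Hpa in H.
      rewrite S_INR in H. replace (a + (INR k + 1) - a) with (INR k + 1) in H by ring.
      replace (a + 1 + INR k) with (a + (INR k + 1)) by ring.
      assert (0 < INR k + 1) by (apply Rplus_le_lt_0_compat; [apply pos_INR| lra]).
      rewrite Rplus_0_r in H. apply Rmult_integral in H. destruct H; auto. lra. }
    rewrite Hqe, Hpa, Hq0. ring.
Qed.

Lemma isP_PR c m : isP m (fun r => PR (c + r) m).
Proof.
  induction m.
  - simpl. exists 1; auto.
  - apply isP_ext with (fun r => (r + (c + INR m)) * PR (c + r) m).
    apply isP_mul_lin; auto. intros; simpl; ring.
Qed.

Lemma isP_A t c n : isP n (fun r => A t (c + r) n).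
Proof.
  destruct n as [|m].
  - simpl. exists 1; auto.
  - unfold A. apply isP_ext with
      (fun r => / INR (fact (S m)) * ((r + c) * PR ((t * INR (S m) + c - INR m) + r) m)).
    + apply isP_scal, isP_mul_lin, isP_PR.
    + intros r. unfold Rdiv. replace (t * INR (S m) + c - INR m + r) with (t * INR (S m) + (c + r) - INR m) by ring.
      ring.
Qed.

Theorem HR t : forall n r s,
  sum_f_R0 (fun k => A t r k * A t s (n - k)) n = A t (r + s) n.
Proof.
  induction n as [|m IH]; intros r s.
  - simpl. ring.
  - set (E := fun r => sum_f_R0 (fun k => A t r k * A t s (S m - k)) (S m) - A t (r + s) (S m)).
    assert (Hper : forall r, E r = E (r - 1)).
    { intros r'. unfold E.
      assert (Hd : forall r0, sum_f_R0 (fun k => A t r0 k * A t s (S m - k)) (S m)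
               = A t s (S m) + sum_f_R0 (fun k => A t r0 (S k) * A t s (m - k)) m).
      { intros r0. rewrite decomp_sum by lia. simpl pred. simpl (A t r0 0). 
        replace (S m - 0)%nat with (S m) by lia. f_equal. ring. }
      rewrite !Hd.
      assert (Hs : sum_f_R0 (fun k => A t r' (S k) * A t s (m - k)) m
                 - sum_f_R0 (fun k => A t (r' - 1) (S k) * A t s (m - k)) m
                 = A t (r' - 1 + t + s) m).
      { rewrite <- minus_sum. rewrite <- IH. apply sum_eq. intros k _.
        rewrite <- A_rec. ring. }
      assert (Hr := A_rec t (r' + s) m).
      replace (r' - 1 + s) with (r' + s - 1) by ring.
      replace (r' + s - 1 + t) with (r' - 1 + t + s) in Hr by ring.
      lra. }
    assert (HE0 : forall k : nat, E (0 + INR k) = 0).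
    { induction k.
      - unfold E. replace (0 + INR 0) with 0 by (simpl; ring). replace (0 + s) with s by ring.
        rewrite decomp_sum by lia. simpl pred.
        rewrite (sum_eq _ (fun _ => 0)).
        + rewrite sum_cte. simpl. ring.
        + intros i _. rewrite A_0 by lia. ring.
      - rewrite Hper. rewrite S_INR. replace (0 + (INR k + 1) - 1) with (0 + INR k) by ring. auto. }
    assert (HP : isP (S m) E).
    { unfold E. apply isP_ext with
        (fun r => sum_f_R0 (fun k => A t (0 + r) k * A t s (S m - k)) (S m) + (-1) * A t (s + r) (S m)).
      - apply isP_plus.
        + apply isP_sum. intros k Hk. apply isP_ext with (fun r => A t s (S m - k) * A t (0 + r) k).
          apply isP_scal. apply isP_mono with k; auto. apply isP_A. intros; ring.
        + apply isP_scal, isP_A.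
      - intros r0. replace (0 + r0) with r0 by ring. replace (s + r0) with (r0 + s) by ring. ring. }
    assert (Hz := isP_zero (S m) E 0 HP HE0 r).
    unfold E in Hz. lra.
Qed.

Definition Cterm (c : nat -> R) (x : C) (n : nat) : C := (RtoC (c n) * Cpow x n)%C.
Definition AC (c : nat -> R) (s : R) : Prop := ex_series (fun n => Rabs (c n) * s ^ n).
Definition Vc (c : nat -> R) (x : C) : C := CSeries (Cterm c x).
Definition convR (c d : nat -> R) (n : nat) : R := sum_f_R0 (fun k => c k * d (n - k)%nat) n.

Lemma sum_n_fst (a : nat -> C) n :
  fst (@sum_n C_AbelianMonoid a n) = sum_n (fun k => fst (a k)) n.
Proof.
  induction n.
  - rewrite !sum_O. reflexivity.
  - rewrite !sum_Sn. simpl. rewrite <- IHn. reflexivity.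
Qed.

Lemma sum_n_snd (a : nat -> C) n :
  snd (@sum_n C_AbelianMonoid a n) = sum_n (fun k => snd (a k)) n.
Proof.
  induction n.
  - rewrite !sum_O. reflexivity.
  - rewrite !sum_Sn. simpl. rewrite <- IHn. reflexivity.
Qed.

Lemma is_series_C_iff (a : nat -> C) (l : C) :
  @is_series C_AbsRing C_NormedModule a l <->
  is_series (fun n => fst (a n)) (fst l) /\ is_series (fun n => snd (a n)) (snd l).
Proof.
  unfold is_series. split.
  - intros H. pose proof (proj1 (@filterlim_locally nat C_NormedModule eventually _ (sum_n a) l) H) as X.
    split; apply (proj2 (@filterlim_locally nat R_NormedModule eventually _ _ _)); intros eps; generalize (X eps); apply filter_imp; intros n [H1 H2];
      [rewrite <- sum_n_fst | rewrite <- sum_n_snd]; auto.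
  - intros [H1 H2].
    pose proof (proj1 (@filterlim_locally nat R_NormedModule eventually _ _ _) H1) as X1.
    pose proof (proj1 (@filterlim_locally nat R_NormedModule eventually _ _ _) H2) as X2.
    apply (proj2 (@filterlim_locally nat C_NormedModule eventually _ (sum_n a) l)). intros eps.
    generalize (filter_and _ _ (X1 eps) (X2 eps)). apply filter_imp.
    intros n [Ha Hb]. split; [rewrite sum_n_fst | rewrite sum_n_snd]; auto.
Qed.

Lemma CSeries_correct (a : nat -> C) :
  @ex_series C_AbsRing C_NormedModule a -> @is_series C_AbsRing C_NormedModule a (CSeries a).
Proof.
  intros [l Hl]. assert (H := Hl). apply is_series_C_iff in H. destruct H as [H1 H2].
  unfold CSeries. rewrite (is_series_unique _ _ H1), (is_series_unique _ _ H2).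
  destruct l; auto.
Qed.

Lemma CSeries_unique (a : nat -> C) l :
  @is_series C_AbsRing C_NormedModule a l -> CSeries a = l.
Proof.
  intros Hl. apply is_series_C_iff in Hl. destruct Hl as [H1 H2].
  unfold CSeries. rewrite (is_series_unique _ _ H1), (is_series_unique _ _ H2).
  destruct l; auto.
Qed.

Lemma Cmod_Cterm c x n : Cmod (Cterm c x n) = Rabs (c n) * Cmod x ^ n.
Proof. unfold Cterm. rewrite Cmod_mult, Cmod_pow, Cmod_R. auto. Qed.

Lemma AC_ex c x : AC c (Cmod x) -> @ex_series C_AbsRing C_NormedModule (Cterm c x).
Proof.
  intros H.
  apply (@ex_series_le C_AbsRing C_CompleteNormedModule _ (fun n => Rabs (c n) * Cmod x ^ n)).
  - intros n. change (Cmod (Cterm c x n) <= Rabs (c n) * Cmod x ^ n). rewrite Cmod_Cterm. lra.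
  - exact H.
Qed.

Lemma Vc_correct c x : AC c (Cmod x) -> @is_series C_AbsRing C_NormedModule (Cterm c x) (Vc c x).
Proof. intros H. apply CSeries_correct, AC_ex, H. Qed.

Lemma Vc_ext c d x : (forall n, c n = d n) -> Vc c x = Vc d x.
Proof.
  intros H. unfold Vc, CSeries. f_equal; apply Series_ext; intros n; unfold Cterm; rewrite H; auto.
Qed.

Lemma AC_ext c d s : (forall n, c n = d n) -> AC c s -> AC d s.
Proof.
  intros H. unfold AC. apply ex_series_ext. intros n; rewrite H; auto.
Qed.

Lemma Rabs_fst_le (z : C) : Rabs (fst z) <= Cmod z.
Proof. eapply Rle_trans; [apply Rmax_l | apply Rmax_Cmod]. Qed.
Lemma Rabs_snd_le (z : C) : Rabs (snd z) <= Cmod z.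
Proof. eapply Rle_trans; [apply Rmax_r | apply Rmax_Cmod]. Qed.

Lemma sum_f_R0_minus_distr (f g : nat -> R) n :
  sum_f_R0 (fun k => f k - g k) n = sum_f_R0 f n - sum_f_R0 g n.
Proof. induction n; simpl; try rewrite IHn; ring. Qed.
Lemma sum_f_R0_plus_distr (f g : nat -> R) n :
  sum_f_R0 (fun k => f k + g k) n = sum_f_R0 f n + sum_f_R0 g n.
Proof. induction n; simpl; try rewrite IHn; ring. Qed.
Lemma sum_f_R0_scal (f : nat -> R) c n :
  sum_f_R0 (fun k => c * f k) n = c * sum_f_R0 f n.
Proof. induction n; simpl; try rewrite IHn; ring. Qed.

Lemma AC_conv c d s : 0 <= s -> AC c s -> AC d s -> AC (convR c d) s.
Proof.
  intros Hs Hc Hd.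
  destruct Hc as [lc Hc]. destruct Hd as [ld Hd].
  assert (Hm := is_series_mult_pos _ _ _ _ Hc Hd
    (fun n => Rmult_le_pos _ _ (Rabs_pos _) (pow_le _ _ Hs))
    (fun n => Rmult_le_pos _ _ (Rabs_pos _) (pow_le _ _ Hs))).
  unfold AC. apply (@ex_series_le R_AbsRing R_CompleteNormedModule _
    (fun n => sum_f_R0 (fun k => Rabs (c k) * s ^ k * (Rabs (d (n - k)%nat) * s ^ (n - k))) n)).
  - intros n. change (Rabs (Rabs (convR c d n) * s ^ n) <= sum_f_R0 (fun k => Rabs (c k) * s ^ k * (Rabs (d (n - k)%nat) * s ^ (n - k))) n).
    rewrite Rabs_pos_eq by (apply Rmult_le_pos; [apply Rabs_pos | apply pow_le; auto]).
    unfold convR. eapply Rle_trans.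
    + apply Rmult_le_compat_r. apply pow_le; auto. apply sum_f_R0_triangle.
    + rewrite Rmult_comm, <- sum_f_R0_scal. apply Req_le. apply sum_eq. intros k Hk.
      rewrite Rabs_mult. replace (s ^ n) with (s ^ k * s ^ (n - k)) by (rewrite <- pow_add; f_equal; lia).
      ring.
  - eexists; eauto.
Qed.

Lemma Cpow_fst_snd (x : C) k m :
  fst (Cpow x (k + m)) = fst (Cpow x k) * fst (Cpow x m) - snd (Cpow x k) * snd (Cpow x m) /\
  snd (Cpow x (k + m)) = fst (Cpow x k) * snd (Cpow x m) + snd (Cpow x k) * fst (Cpow x m).
Proof. rewrite Cpow_add_r. simpl. split; ring. Qed.

Lemma Vc_mult c d x : AC c (Cmod x) -> AC d (Cmod x) ->
  @is_series C_AbsRing C_NormedModule (Cterm (convR c d) x) (Vc c x * Vc d x)%C.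
Proof.
  intros Hc Hd.
  assert (Hcs := Vc_correct c x Hc). assert (Hds := Vc_correct d x Hd).
  apply is_series_C_iff in Hcs. apply is_series_C_iff in Hds.
  destruct Hcs as [Hc1 Hc2]. destruct Hds as [Hd1 Hd2].
  set (u := fun n => fst (Cpow x n)). set (v := fun n => snd (Cpow x n)).
  assert (Eu : forall n, fst (Cterm c x n) = c n * u n) by (intros; unfold Cterm, u; simpl; ring).
  assert (Ev : forall n, snd (Cterm c x n) = c n * v n) by (intros; unfold Cterm, v; simpl; ring).
  assert (Eu' : forall n, fst (Cterm d x n) = d n * u n) by (intros; unfold Cterm, u; simpl; ring).
  assert (Ev' : forall n, snd (Cterm d x n) = d n * v n) by (intros; unfold Cterm, v; simpl; ring).
  assert (ACabs : forall (e : nat -> R) (w : nat -> R), AC e (Cmod x) ->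
            (forall n, Rabs (w n) <= Cmod (Cpow x n)) -> ex_series (fun n => Rabs (e n * w n))).
  { intros e w He Hw. apply (@ex_series_le R_AbsRing R_CompleteNormedModule _ (fun n => Rabs (e n) * Cmod x ^ n)); auto.
    intros n. change (Rabs (Rabs (e n * w n)) <= Rabs (e n) * Cmod x ^ n).
    rewrite Rabs_Rabsolu, Rabs_mult, <- Cmod_pow. apply Rmult_le_compat_l; [apply Rabs_pos | apply Hw]. }
  assert (Hu : forall n, Rabs (u n) <= Cmod (Cpow x n)) by (intros; apply Rabs_fst_le).
  assert (Hv : forall n, Rabs (v n) <= Cmod (Cpow x n)) by (intros; apply Rabs_snd_le).
  apply is_series_C_iff. split.
  - assert (H1 := is_series_mult (fun n => c n * u n) (fun n => d n * u n) _ _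
        (is_series_ext _ _ _ Eu Hc1) (is_series_ext _ _ _ Eu' Hd1) (ACabs _ _ Hc Hu) (ACabs _ _ Hd Hu)).
    assert (H2 := is_series_mult (fun n => c n * v n) (fun n => d n * v n) _ _
        (is_series_ext _ _ _ Ev Hc2) (is_series_ext _ _ _ Ev' Hd2) (ACabs _ _ Hc Hv) (ACabs _ _ Hd Hv)).
    assert (H3 := is_series_minus _ _ _ _ H1 H2).
    replace (fst (Vc c x * Vc d x)%C) with (fst (Vc c x) * fst (Vc d x) - snd (Vc c x) * snd (Vc d x)) by (simpl; ring).
    revert H3. apply is_series_ext. intros n. unfold minus, plus, opp; simpl.
    unfold Cterm, convR. simpl fst. change (fst (RtoC ?a)) with a. change (snd (RtoC ?a)) with 0.
    rewrite Rmult_0_l, Rminus_0_r.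
    transitivity (sum_f_R0 (fun k => c k * u k * (d (n-k)%nat * u (n-k)%nat) - c k * v k * (d (n-k)%nat * v (n-k)%nat)) n).
    { rewrite sum_f_R0_minus_distr. ring. }
    rewrite Rmult_comm, <- sum_f_R0_scal. apply sum_eq. intros k Hk.
    destruct (Cpow_fst_snd x k (n - k)) as [E1 E2]. replace (k + (n - k))%nat with n in E1 by lia.
    unfold u, v in *. rewrite E1. ring.
  - assert (H1 := is_series_mult (fun n => c n * u n) (fun n => d n * v n) _ _
        (is_series_ext _ _ _ Eu Hc1) (is_series_ext _ _ _ Ev' Hd2) (ACabs _ _ Hc Hu) (ACabs _ _ Hd Hv)).
    assert (H2 := is_series_mult (fun n => c n * v n) (fun n => d n * u n) _ _
        (is_series_ext _ _ _ Ev Hc2) (is_series_ext _ _ _ Eu' Hd1) (ACabs _ _ Hc Hv) (ACabs _ _ Hd Hu)).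
    assert (H3 := is_series_plus _ _ _ _ H1 H2).
    replace (snd (Vc c x * Vc d x)%C) with (fst (Vc c x) * snd (Vc d x) + snd (Vc c x) * fst (Vc d x)) by (simpl; ring).
    revert H3. apply is_series_ext. intros n. unfold plus; simpl.
    unfold Cterm, convR. simpl snd. change (fst (RtoC ?a)) with a. change (snd (RtoC ?a)) with 0.
    rewrite Rmult_0_l, Rplus_0_r.
    rewrite <- sum_f_R0_plus_distr. rewrite Rmult_comm, <- sum_f_R0_scal. apply sum_eq. intros k Hk.
    destruct (Cpow_fst_snd x k (n - k)) as [E1 E2]. replace (k + (n - k))%nat with n in E2 by lia.
    unfold u, v in *. rewrite E2. ring.
Qed.

Lemma is_series_finite (a : nat -> C) N :
  (forall n, (N < n)%nat -> a n = RtoC 0) -> @is_series C_AbsRing C_NormedModule a (sum_n a N).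
Proof.
  intros H. unfold is_series.
  apply filterlim_ext_loc with (fun _ => sum_n a N).
  - exists N. intros n Hn. induction Hn; auto.
    rewrite sum_Sn, H by lia. rewrite IHHn. symmetry. apply (@plus_zero_r C_AbelianMonoid).
  - apply filterlim_const.
Qed.

Lemma AC_finite c s N : (forall n, (N < n)%nat -> c n = 0) -> AC c s.
Proof.
  intros H. unfold AC. exists (sum_n (fun n => Rabs (c n) * s ^ n) N).
  unfold is_series. apply filterlim_ext_loc with (fun _ => sum_n (fun n => Rabs (c n) * s ^ n) N).
  - exists N. intros n Hn. induction Hn; auto.
    rewrite sum_Sn, H by lia. rewrite IHHn. rewrite Rabs_R0, Rmult_0_l. symmetry. apply (@plus_zero_r R_AbelianMonoid).
  - apply filterlim_const.
Qed.

Lemma A_t0 t n : A t 0 n = if Nat.eqb n 0 then 1 else 0.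
Proof. destruct n; simpl. auto. unfold Rdiv; ring. Qed.

Lemma AC_A0 t s : AC (A t 0) s.
Proof. apply AC_finite with 0%nat. intros n Hn. rewrite A_t0. destruct n; [lia|auto]. Qed.

Lemma Vc_A0 t x : Vc (A t 0) x = RtoC 1.
Proof.
  apply CSeries_unique.
  replace (RtoC 1) with (sum_n (Cterm (A t 0) x) 0).
  - apply is_series_finite. intros n Hn. unfold Cterm. rewrite A_t0. destruct n; [lia|]. simpl. apply (Cmult_0_l).
  - rewrite sum_O. unfold Cterm. simpl. apply injective_projections; simpl; ring.
Qed.

Lemma Vc_mult_eq c d x : AC c (Cmod x) -> AC d (Cmod x) ->
  Vc (convR c d) x = (Vc c x * Vc d x)%C.
Proof. intros; apply CSeries_unique, Vc_mult; auto. Qed.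

Lemma V_pow t r x : AC (A t r) (Cmod x) -> forall k,
  AC (A t (INR k * r)) (Cmod x) /\ Vc (A t (INR k * r)) x = Cpow (Vc (A t r) x) k.
Proof.
  intros Hr k. induction k as [|k [IH1 IH2]].
  - simpl. replace (0 * r) with 0 by ring. split. apply AC_A0. apply Vc_A0.
  - assert (E : forall n, A t (INR (S k) * r) n = convR (A t (INR k * r)) (A t r) n).
    { intros n. unfold convR. rewrite HR. f_equal. rewrite S_INR. ring. }
    split.
    + eapply AC_ext. intros n; symmetry; apply E. apply AC_conv; auto. apply Cmod_ge_0.
    + rewrite (Vc_ext _ _ _ E). rewrite Vc_mult_eq; auto. rewrite IH2. rewrite Cpow_S. ring.
Qed.

Lemma Vc_shift c d x : AC d (Cmod x) -> c 0%nat = 1 -> (forall n, c (S n) = d n) ->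
  Vc c x = (RtoC 1 + x * Vc d x)%C.
Proof.
  intros Hd H0 HS. apply CSeries_unique.
  apply is_series_decr_1.
  assert (H := is_series_scal x _ _ (Vc_correct d x Hd)).
  match goal with |- is_series _ ?L => replace L with (@scal C_AbsRing C_NormedModule x (Vc d x)) end.
  - revert H. apply is_series_ext. intros n. unfold Cterm. rewrite HS.
    change (x * (RtoC (d n) * Cpow x n) = RtoC (d n) * Cpow x (S n))%C. rewrite Cpow_S. ring.
  - unfold Cterm. rewrite H0.
    change (@eq C (x * Vc d x)%C (Cplus (RtoC 1 + x * Vc d x) (Copp (RtoC 1 * Cpow x 0))))%C.
    simpl Cpow. ring.
Qed.

Lemma Vc_minus c d x : AC c (Cmod x) -> AC d (Cmod x) ->
  (Vc c x - Vc d x)%C = Vc (fun n => c n - d n) x.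
Proof.
  intros Hc Hd. symmetry. apply CSeries_unique.
  assert (H := is_series_minus _ _ _ _ (Vc_correct c x Hc) (Vc_correct d x Hd)).
  revert H. apply is_series_ext. intros n. unfold Cterm, minus, plus, opp. simpl.
  change (Cplus (RtoC (c n) * x ^ n) (Copp (RtoC (d n) * x ^ n)) = RtoC (c n - d n) * x ^ n)%C.
  rewrite RtoC_minus. ring.
Qed.

Lemma Vc_e1 x : Vc (fun n => if Nat.eqb n 1 then 1 else 0) x = x.
Proof.
  apply CSeries_unique.
  assert (E : sum_n (Cterm (fun n => if Nat.eqb n 1 then 1 else 0) x) 1 = x).
  { rewrite sum_Sn, sum_O. unfold Cterm. simpl. change (plus ?a ?b) with (Cplus a b).
    apply injective_projections; simpl; ring. }
  rewrite <- E at 2.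
  apply is_series_finite. intros n Hn. unfold Cterm. destruct n as [|[|n]]; try lia. simpl. apply Cmult_0_l.
Qed.

Lemma falling_PR a n : falling a n = PR (a - INR n + 1) n.
Proof.
  induction n.
  - reflexivity.
  - simpl falling. rewrite IHn. rewrite PR_S_bot. rewrite S_INR.
    replace (a - (INR n + 1) + 1 + 1) with (a - INR n + 1) by ring. ring.
Qed.

Lemma Bcoef_A t r n : (forall m, t * INR (S m) + r <> 0) -> Bcoef t r n = A t r n.
Proof.
  intros H. destruct n as [|m]; [reflexivity|].
  unfold Bcoef, A, gbinom. rewrite falling_PR.
  set (a := t * INR (S m) + r).
  replace (a - INR (S m) + 1) with (t * INR (S m) + r - INR m) by (unfold a; rewrite S_INR; ring).
  change (PR (t * INR (S m) + r - INR m) (S m)) with (PR (t * INR (S m) + r - INR m) m * (t * INR (S m) + r - INR m + INR m)).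
  replace (t * INR (S m) + r - INR m + INR m) with a by (unfold a; ring).
  assert (Ha := H m). fold a in Ha. assert (Hf := INR_fact_pos (S m)).
  replace (t * INR (S m) + r - INR m) with (a - INR m) by (unfold a; ring). field. split; lra.
Qed.

Lemma Bpow_Vc t r x : (forall m, t * INR (S m) + r <> 0) -> Bpow t r x = Vc (A t r) x.
Proof. intros H. unfold Bpow, Vc. apply (Vc_ext _ _ x). intros n. apply Bcoef_A; auto. Qed.

Lemma A_1_S t n : A t 1 (S n) = A t t n.
Proof.
  assert (H := A_rec t 1 n). replace (1 - 1) with 0 in H by ring. rewrite A_0 in H by lia.
  replace (0 + t) with t in H by ring. lra.
Qed.

Lemma caseA_eq (t : R) (m : nat) x : t = INR m -> AC (A t 1) (Cmod x) ->
  Vc (A t 1) x = (RtoC 1 + x * Cpow (Vc (A t 1) x) m)%C.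
Proof.
  intros Ht Hac.
  destruct (V_pow t 1 x Hac m) as [H1 H2].
  replace (INR m * 1) with t in H1, H2 by (rewrite Ht; ring).
  rewrite <- H2. apply Vc_shift; auto. intros n. apply A_1_S.
Qed.

Lemma caseB_diff t r x (h : nat) : (0 < INR h) -> t = (INR h + 1) / INR h -> r = - (1 / INR h) ->
  AC (A t r) (Cmod x) ->
  (Vc (A t r) x - Cpow (Vc (A t r) x) (S h))%C = x.
Proof.
  intros Hh Ht Hr Hac.
  destruct (V_pow t r x Hac (S h)) as [H1 H2].
  rewrite <- H2. rewrite Vc_minus; auto.
  rewrite <- (Vc_e1 x) at 2. apply Vc_ext. intros n.
  destruct n as [|m].
  - simpl. ring.
  - assert (E : INR (S h) * r = r - 1) by (rewrite Hr, S_INR; field; lra).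
    rewrite E, A_rec.
    replace (r - 1 + t) with 0 by (rewrite Hr, Ht; field; lra).
    rewrite A_t0. destruct m; reflexivity.
Qed.

Lemma caseB_root (h : nat) (c x g : C) :
  Cpow c h = RtoC 2 -> (c * x = RtoC (1/2))%C -> (g - Cpow g (S h) = x)%C ->
  (RtoC 1 - RtoC 2 * (c * g) + Cpow (c * g) (h + 1) = RtoC 0)%C.
Proof.
  intros Hc Hcx Hg.
  replace (h + 1)%nat with (S h) by lia.
  rewrite Cpow_mult_l, Cpow_S, Hc.
  replace (Cpow g (S h)) with (g - x)%C by (rewrite <- Hg; ring).
  match goal with |- ?L = _ => replace L with (RtoC 1 - RtoC 2 * (c * x))%C by ring end.
  rewrite Hcx. apply injective_projections; simpl; field.
Qed.

Lemma Cpow_cis (a : R) n : Cpow (cos a, sin a) n = (cos (INR n * a), sin (INR n * a)).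
Proof.
  induction n.
  - simpl. rewrite Rmult_0_l, cos_0, sin_0. reflexivity.
  - rewrite Cpow_S, IHn. rewrite S_INR.
    replace ((INR n + 1) * a) with (a + INR n * a) by ring.
    rewrite cos_plus, sin_plus. apply injective_projections; simpl; ring.
Qed.

Lemma Cmod_cis a : Cmod (cos a, sin a) = 1.
Proof.
  unfold Cmod. rewrite <- sqrt_1. f_equal. simpl fst. simpl snd.
  assert (H := sin2_cos2 a). unfold Rsqr in H. simpl. lra.
Qed.

Lemma zeta_pow_h (h : nat) : (0 < h)%nat -> Cpow (zeta h) h = RtoC 1.
Proof.
  intros H. unfold zeta. rewrite Cpow_cis.
  replace (INR h * (2 * PI / INR h)) with (2 * PI).
  - rewrite cos_2PI, sin_2PI. reflexivity.
  - field. apply not_0_INR. lia.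
Qed.

Lemma Cmod_zeta_pow h j : Cmod (Cpow (zeta h) j) = 1.
Proof. unfold zeta. rewrite Cpow_cis. apply Cmod_cis. Qed.

Lemma zeta_pow_nz h j : Cpow (zeta h) j <> RtoC 0.
Proof. intros E. assert (H := Cmod_zeta_pow h j). rewrite E, Cmod_0 in H. lra. Qed.

Definition KK (h : nat) : R := (INR h + 1) ^ (h + 1) / INR h ^ h.

Lemma INR_ge2 k : (2 <= k)%nat -> 2 <= INR k.
Proof. intros H. apply le_INR in H. simpl in H. lra. Qed.

Lemma step_ineq k : (2 <= k)%nat ->
  (INR k + 2) ^ (k + 2) * INR k ^ k <= 2 * ((INR k + 1) ^ (k + 1) * (INR k + 1) ^ (k + 1)).
Proof.
  intros Hk. assert (Hx := INR_ge2 k Hk). set (x := INR k) in *.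
  assert (H1 : ((x + 2) * x) ^ (k + 1) <= ((x + 1) * (x + 1)) ^ (k + 1)).
  { apply pow_incr. nra. }
  rewrite !Rpow_mult_distr in H1.
  assert (E : (x + 2) ^ (k + 2) * x ^ k * x = (x + 2) ^ (k + 1) * x ^ (k + 1) * (x + 2)).
  { replace (k + 2)%nat with (S (k + 1)) by lia. replace (k + 1)%nat with (S k) by lia. simpl. ring. }
  assert (Hxk : 0 < x ^ (k + 1)) by (apply pow_lt; lra).
  assert (Hp : 0 <= (x + 1) ^ (k + 1) * (x + 1) ^ (k + 1)) by (apply Rmult_le_pos; apply pow_le; lra).
  apply Rmult_le_reg_r with x; [lra|]. rewrite E.
  apply Rle_trans with ((x + 1) ^ (k + 1) * (x + 1) ^ (k + 1) * (x + 2)).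
  - apply Rmult_le_compat_r; lra.
  - nra.
Qed.

Lemma KK_ineq_aux k : (2 <= k)%nat -> 32 * (INR k + 1) ^ (k + 1) <= 27 * 2 ^ (k + 1) * INR k ^ k.
Proof.
  intros Hk. induction Hk as [|k Hk IH].
  - simpl. lra.
  - rewrite S_INR. assert (Hx := INR_ge2 k Hk). set (x := INR k) in *.
    replace (x + 1 + 1) with (x + 2) by ring.
    assert (St := step_ineq k Hk). fold x in St.
    assert (Hxk : 0 < x ^ k) by (apply pow_lt; lra).
    assert (Hq : 0 < (x + 1) ^ (k + 1)) by (apply pow_lt; lra).
    replace (S k + 1)%nat with (k + 2)%nat by lia.
    replace (S k) with (k + 1)%nat by lia.
    replace (2 ^ (k + 2)) with (2 * 2 ^ (k + 1)) by (replace (k + 2)%nat with (S (k + 1)) by lia; simpl; ring).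
    apply Rmult_le_reg_r with (x ^ k); auto.
    apply Rle_trans with (64 * ((x + 1) ^ (k + 1) * (x + 1) ^ (k + 1))); [nra|].
    nra.
Qed.

Lemma KK_bound h : (2 <= h)%nat -> KK h / 2 ^ (h + 1) <= 27 / 32.
Proof.
  intros Hh. unfold KK. assert (H := KK_ineq_aux h Hh).
  assert (Hx := INR_ge2 h Hh).
  assert (0 < INR h ^ h) by (apply pow_lt; lra).
  assert (0 < 2 ^ (h + 1)) by (apply pow_lt; lra).
  unfold Rdiv. rewrite Rmult_assoc, <- Rinv_mult.
  apply Rmult_le_reg_r with (INR h ^ h * 2 ^ (h + 1)). nra.
  rewrite Rmult_assoc, Rinv_l by nra. nra.
Qed.

Lemma pow_le_root a b n : 0 <= a -> 0 <= b -> (0 < n)%nat -> a ^ n <= b ^ n -> a <= b.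
Proof.
  intros Ha Hb Hn H. destruct (Rle_lt_dec a b) as [|Hlt]; auto.
  exfalso. assert (forall m, b ^ S m < a ^ S m).
  { induction m. simpl. lra. change (b * b ^ S m < a * a ^ S m).
    assert (0 <= b ^ S m) by (apply pow_le; auto). nra. }
  destruct n; [lia|]. specialize (H0 n). lra.
Qed.

Lemma PR_pos lo m : 0 < lo -> 0 < PR lo m.
Proof.
  intros H. induction m; simpl. lra. apply Rmult_lt_0_compat; auto.
  assert (0 <= INR m) by apply pos_INR. lra.
Qed.

Lemma PR_add lo a b : PR lo (a + b) = PR lo a * PR (lo + INR a) b.
Proof.
  induction b.
  - simpl. rewrite Nat.add_0_r. ring.
  - rewrite Nat.add_succ_r. simpl. rewrite IHb. rewrite plus_INR. ring.
Qed.

Lemma PR_cmp lo1 lo2 a b k :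
  (forall i, (i < k)%nat -> 0 <= a * (lo1 + INR i) <= b * (lo2 + INR i)) ->
  a ^ k * PR lo1 k <= b ^ k * PR lo2 k.
Proof.
  induction k; intros H.
  - simpl. lra.
  - simpl. assert (IH := IHk (fun i Hi => H i ltac:(lia))).
    assert (Hk := H k ltac:(lia)).
    assert (0 <= a ^ k * PR lo1 k).
    { clear IHk IH Hk. induction k. simpl; lra.
      simpl. specialize (IHk (fun i Hi => H i ltac:(lia))). assert (Hk := H k ltac:(lia)).
      replace (a * a ^ k * (PR lo1 k * (lo1 + INR k))) with ((a ^ k * PR lo1 k) * (a * (lo1 + INR k))) by ring.
      apply Rmult_le_pos; lra. }
    replace (a * a ^ k * (PR lo1 k * (lo1 + INR k))) with ((a ^ k * PR lo1 k) * (a * (lo1 + INR k))) by ring.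
    replace (b * b ^ k * (PR lo2 k * (lo2 + INR k))) with ((b ^ k * PR lo2 k) * (b * (lo2 + INR k))) by ring.
    apply Rmult_le_compat; lra.
Qed.

Definition cA (h : nat) (n : nat) : R := A (INR h + 1) 1 n.

Lemma cA_pos h n : 0 <= cA h n.
Proof.
  destruct n as [|m]; unfold cA, A. lra.
  assert (0 < PR ((INR h + 1) * INR (S m) + 1 - INR m) m).
  { apply PR_pos. rewrite S_INR. assert (0 <= INR h) by apply pos_INR. assert (0 <= INR m) by apply pos_INR. nra. }
  assert (Hf := INR_fact_pos (S m)).
  apply Rmult_le_pos; [|left; apply Rinv_0_lt_compat; auto]. lra.
Qed.

Lemma cA_1 h : cA h 1 = 1.
Proof. unfold cA, A. simpl. field. Qed.

Lemma cA_ratio h m : (1 <= h)%nat -> cA h (S (S m)) <= KK h * cA h (S m).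
Proof.
  intros Hh. unfold cA, A, KK.
  set (X := INR h). set (M := INR m).
  assert (HX : 1 <= X) by (unfold X; apply le_INR in Hh; simpl in Hh; lra).
  assert (HM : 0 <= M) by apply pos_INR.
  set (lo1 := (X + 1) * INR (S m) + 1 - M).
  set (lo2 := (X + 1) * INR (S (S m)) + 1 - INR (S m)).
  assert (E1 : lo1 = X * M + X + 2) by (unfold lo1; rewrite S_INR; fold M; ring).
  assert (E2 : lo2 = lo1 + X) by (unfold lo2; rewrite E1, !S_INR; fold M; ring).
  assert (Key : PR lo2 (S m) * PR lo1 h = PR lo1 m * PR (lo1 + M) (S h)).
  { rewrite E2. transitivity (PR lo1 (h + S m)).
    - rewrite PR_add. fold X. ring.
    - replace (h + S m)%nat with (m + S h)%nat by lia. rewrite PR_add. reflexivity. }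
  assert (Hlast : PR (lo1 + M) (S h) = PR (lo1 + M) h * ((X + 1) * (M + 2))).
  { simpl. fold X. f_equal. rewrite E1. ring. }
  assert (Cmp : X ^ h * PR (lo1 + M) h <= (X + 1) ^ h * PR lo1 h).
  { apply PR_cmp. intros i Hi. assert (0 <= INR i) by apply pos_INR. rewrite E1. nra. }
  assert (P1 : 0 < PR lo1 m) by (apply PR_pos; rewrite E1; nra).
  assert (P2 : 0 < PR lo1 h) by (apply PR_pos; rewrite E1; nra).
  assert (Hf := INR_fact_pos (S m)).
  assert (HXh : 0 < X ^ h) by (apply pow_lt; lra).
  change (fact (S (S m))) with (S (S m) * fact (S m))%nat. rewrite mult_INR.
  replace (INR (S (S m))) with (M + 2) by (rewrite !S_INR; fold M; ring).
  set (F := INR (fact (S m))) in *.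
  assert (Goal' : PR lo2 (S m) * PR lo1 h * X ^ h <= (X + 1) ^ (h + 1) * (M + 2) * PR lo1 m * PR lo1 h).
  { rewrite Key, Hlast. replace (h + 1)%nat with (S h) by lia. change ((X + 1) ^ S h) with ((X + 1) * (X + 1) ^ h).
    assert (0 <= PR lo1 m * ((X + 1) * (M + 2))) by (apply Rmult_le_pos; [lra | apply Rmult_le_pos; lra]).
    replace (PR lo1 m * (PR (lo1 + M) h * ((X + 1) * (M + 2))) * X ^ h)
      with ((PR lo1 m * ((X + 1) * (M + 2))) * (X ^ h * PR (lo1 + M) h)) by ring.
    replace ((X + 1) * (X + 1) ^ h * (M + 2) * PR lo1 m * PR lo1 h)
      with ((PR lo1 m * ((X + 1) * (M + 2))) * ((X + 1) ^ h * PR lo1 h)) by ring.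
    apply Rmult_le_compat_l; auto. }
  apply Rmult_le_reg_r with (PR lo1 h * X ^ h * ((M + 2) * F)). 
  { apply Rmult_lt_0_compat; [apply Rmult_lt_0_compat; auto | apply Rmult_lt_0_compat; lra]. }
  replace (1 * PR lo2 (S m) / ((M + 2) * F) * (PR lo1 h * X ^ h * ((M + 2) * F)))
    with (PR lo2 (S m) * PR lo1 h * X ^ h) by (field; lra).
  replace ((X + 1) ^ (h + 1) / X ^ h * (1 * PR lo1 m / F) * (PR lo1 h * X ^ h * ((M + 2) * F)))
    with ((X + 1) ^ (h + 1) * (M + 2) * PR lo1 m * PR lo1 h) by (field; lra).
  exact Goal'.
Qed.

Lemma FL k : forall a, INR k / 2 < a -> ((a + 1) / a) ^ k <= (a + INR k / 2) / (a - INR k / 2).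
Proof.
  induction k; intros a Ha.
  - simpl in *. unfold Rdiv. rewrite Rmult_0_l, Rplus_0_r, Rminus_0_r. rewrite Rinv_r by lra. lra.
  - rewrite S_INR in *. set (p := INR k / 2). assert (Hp : 0 <= p) by (unfold p; assert (0 <= INR k) by apply pos_INR; lra).
    assert (Hp' : (INR k + 1) / 2 = p + 1/2) by (unfold p; field).
    rewrite Hp' in *.
    assert (IH := IHk a ltac:(unfold p in *; lra)). fold p in IH.
    change (((a + 1) / a) ^ S k) with ((a + 1) / a * ((a + 1) / a) ^ k).
    assert (Hpos : 0 <= (a + 1) / a) by (unfold Rdiv; apply Rmult_le_pos; [lra | left; apply Rinv_0_lt_compat; lra]).
    apply Rle_trans with ((a + 1) / a * ((a + p) / (a - p))).
    + apply Rmult_le_compat_l; auto.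
    + assert (D : (a + (p + 1/2)) / (a - (p + 1/2)) - (a + 1) / a * ((a + p) / (a - p))
                  = (a / 2 + p * p + p / 2) / ((a - (p + 1/2)) * (a - p) * a)) by (field; repeat split; lra).
      assert (0 <= (a / 2 + p * p + p / 2) / ((a - (p + 1/2)) * (a - p) * a)).
      { unfold Rdiv. apply Rmult_le_pos. nra. left. apply Rinv_0_lt_compat.
        apply Rmult_lt_0_compat; [apply Rmult_lt_0_compat|]; lra. }
      lra.
Qed.

Lemma Tele (h : nat) (L : R) : (1 <= h)%nat -> 1 <= L -> forall k,
  PR (L + 1 / INR h) k ^ h * (INR h * L - INR h / 2) <=
  PR L k ^ h * (INR h * L - INR h / 2 + INR h * INR k).
Proof.
  intros Hh HL. set (X := INR h). assert (HX : 1 <= X) by (unfold X; apply le_INR in Hh; simpl in Hh; lra).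
  induction k.
  - simpl. lra.
  - change (PR (L + 1 / X) (S k)) with (PR (L + 1 / X) k * (L + 1 / X + INR k)).
    change (PR L (S k)) with (PR L k * (L + INR k)).
    rewrite !Rpow_mult_distr.
    set (a := X * (L + INR k)).
    assert (HK : 0 <= INR k) by apply pos_INR.
    assert (Ha : X / 2 < a) by (unfold a; nra).
    assert (Fl := FL h a Ha). fold X in Fl.
    assert (E1 : L + 1 / X + INR k = (a + 1) / X) by (unfold a; field; lra).
    assert (E2 : L + INR k = a / X) by (unfold a; field; lra).
    rewrite E1, E2.
    assert (Hek : X * L - X / 2 + X * INR k = a - X / 2) by (unfold a; ring).
    rewrite S_INR. assert (E3 : X * L - X / 2 + X * (INR k + 1) = a + X / 2) by (unfold a; field). rewrite E3.
    rewrite Hek in IHk.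
    assert (Hp1 : 0 <= PR (L + 1 / X) k ^ h) by (apply pow_le; left; apply PR_pos; assert (0 < 1 / X) by (unfold Rdiv; rewrite Rmult_1_l; apply Rinv_0_lt_compat; lra); lra).
    assert (Hq : 0 <= ((a + 1) / X) ^ h) by (apply pow_le; left; unfold Rdiv; apply Rmult_lt_0_compat; [lra|apply Rinv_0_lt_compat; lra]).
    assert (Key : ((a + 1) / X) ^ h * (a - X / 2) <= (a / X) ^ h * (a + X / 2)).
    { replace ((a + 1) / X) with ((a + 1) / a * (a / X)) by (field; lra).
      rewrite Rpow_mult_distr.
      assert (Hax : 0 < (a / X) ^ h) by (apply pow_lt; unfold Rdiv; apply Rmult_lt_0_compat; [lra|apply Rinv_0_lt_compat; lra]).
      assert (Fl' : ((a + 1) / a) ^ h * (a - X / 2) <= a + X / 2).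
      { apply Rmult_le_reg_r with (/ (a - X / 2)). apply Rinv_0_lt_compat; lra.
        rewrite Rmult_assoc, Rinv_r by lra. rewrite Rmult_1_r. exact Fl. }
      nra. }
    apply Rle_trans with (PR L k ^ h * (a - X / 2) * ((a + 1) / X) ^ h).
    + replace (PR (L + 1 / X) k ^ h * ((a + 1) / X) ^ h * (X * L - X / 2))
        with ((PR (L + 1 / X) k ^ h * (X * L - X / 2)) * ((a + 1) / X) ^ h) by ring.
      apply Rmult_le_compat_r; auto.
    + assert (0 <= PR L k ^ h) by (apply pow_le; left; apply PR_pos; lra).
      replace (PR L k ^ h * (a - X / 2) * ((a + 1) / X) ^ h) with (PR L k ^ h * (((a + 1) / X) ^ h * (a - X / 2))) by ring.
      replace (PR L k ^ h * (a / X) ^ h * (a + X / 2)) with (PR L k ^ h * ((a / X) ^ h * (a + X / 2))) by ring.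
      apply Rmult_le_compat_l; auto.
Qed.

Definition tB (h : nat) : R := (INR h + 1) / INR h.
Definition rB (h : nat) : R := - (1 / INR h).

Lemma A_B_form h m : (1 <= h)%nat ->
  A (tB h) (rB h) (S m) = - (/ INR h * PR (1 + INR m / INR h) m / INR (fact (S m))).
Proof.
  intros Hh. assert (HX : 1 <= INR h) by (apply le_INR in Hh; simpl in Hh; lra).
  unfold A, tB, rB. replace ((INR h + 1) / INR h * INR (S m) + - (1 / INR h) - INR m) with (1 + INR m / INR h)
    by (rewrite S_INR; field; lra).
  assert (0 < INR (fact (S m))) by apply INR_fact_pos. field. split; lra.
Qed.

Lemma bB_ratio h m : (1 <= h)%nat ->
  Rabs (A (tB h) (rB h) (S (S m))) ^ h <= KK h * Rabs (A (tB h) (rB h) (S m)) ^ h.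
Proof.
  intros Hh. rewrite !A_B_form by auto.
  set (X := INR h). set (M := INR m).
  assert (HX : 1 <= X) by (unfold X; apply le_INR in Hh; simpl in Hh; lra).
  assert (HM : 0 <= M) by apply pos_INR.
  set (L := 1 + M / X).
  assert (HL : 1 <= L) by (unfold L; assert (0 <= M / X) by (unfold Rdiv; apply Rmult_le_pos; [lra| left; apply Rinv_0_lt_compat; lra]); lra).
  replace (1 + INR (S m) / X) with (L + 1 / X) by (unfold L; rewrite S_INR; fold M; field; lra).
  change (PR (L + 1 / X) (S m)) with (PR (L + 1 / X) m * (L + 1 / X + INR m)).
  fold M.
  replace (L + 1 / X + M) with ((X + 1) * (M + 1) / X) by (unfold L; field; lra).
  change (fact (S (S m))) with (S (S m) * fact (S m))%nat. rewrite mult_INR.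
  replace (INR (S (S m))) with (M + 2) by (rewrite !S_INR; fold M; ring).
  set (F := INR (fact (S m))). assert (HF : 0 < F) by apply INR_fact_pos.
  set (P := PR L m). set (P' := PR (L + 1 / X) m).
  assert (HP : 0 < P) by (apply PR_pos; lra).
  assert (HP' : 0 < P') by (apply PR_pos; assert (0 < 1 / X) by (unfold Rdiv; rewrite Rmult_1_l; apply Rinv_0_lt_compat; lra); lra).
  set (u := / X / F). assert (Hu : 0 < u) by (unfold u, Rdiv; apply Rmult_lt_0_compat; apply Rinv_0_lt_compat; lra).
  set (rho := (X + 1) * (M + 1) / (X * (M + 2))).
  replace (- (/ X * (P' * ((X + 1) * (M + 1) / X)) / ((M + 2) * F))) with (- (u * P' * rho))
    by (unfold u, rho; field; repeat split; lra).
  replace (- (/ X * P / F)) with (- (u * P)) by (unfold u; field; lra).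
  rewrite !Rabs_Ropp. rewrite !Rabs_pos_eq.
  2: { apply Rmult_le_pos; lra. }
  2: { unfold rho. apply Rmult_le_pos. apply Rmult_le_pos; lra. unfold Rdiv. apply Rmult_le_pos. nra.
       left; apply Rinv_0_lt_compat; nra. }
  assert (T := Tele h L Hh HL m). fold X M P P' in T.
  replace (X * L - X / 2) with (M + X / 2) in T by (unfold L; field; lra).
  replace (M + X / 2 + X * M) with (X * M + M + X / 2) in T by ring.
  assert (HP'h : P' ^ h <= (X + 1) * P ^ h).
  { assert (0 <= P ^ h) by (apply pow_le; lra).
    apply Rmult_le_reg_r with (M + X / 2). lra. nra. }
  assert (Hrho : rho ^ h <= ((X + 1) / X) ^ h).
  { apply pow_incr. split. unfold rho, Rdiv. apply Rmult_le_pos. nra. left; apply Rinv_0_lt_compat; nra.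
    unfold rho. apply Rmult_le_reg_r with (X * (M + 2)). nra.
    replace ((X + 1) * (M + 1) / (X * (M + 2)) * (X * (M + 2))) with ((X + 1) * (M + 1)) by (field; lra).
    replace ((X + 1) / X * (X * (M + 2))) with ((X + 1) * (M + 2)) by (field; lra). nra. }
  unfold KK. fold X.
  replace ((X + 1) ^ (h + 1) / X ^ h) with ((X + 1) * ((X + 1) / X) ^ h).
  2: { rewrite Nat.add_comm. simpl. unfold Rdiv. rewrite Rpow_mult_distr, pow_inv. ring. }
  rewrite !Rpow_mult_distr.
  assert (0 <= u ^ h) by (apply pow_le; lra).
  assert (0 <= rho ^ h) by (apply pow_le; unfold rho, Rdiv; apply Rmult_le_pos; [nra| left; apply Rinv_0_lt_compat; nra]).
  assert (0 <= P' ^ h) by (apply pow_le; lra).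
  assert (0 <= P ^ h) by (apply pow_le; lra).
  assert (0 <= ((X + 1) / X) ^ h) by (apply pow_le; unfold Rdiv; apply Rmult_le_pos; [lra| left; apply Rinv_0_lt_compat; lra]).
  apply Rle_trans with (u ^ h * ((X + 1) * P ^ h) * rho ^ h).
  - apply Rmult_le_compat_r; auto. apply Rmult_le_compat_l; auto.
  - replace ((X + 1) * ((X + 1) / X) ^ h * (u ^ h * P ^ h)) with (u ^ h * ((X + 1) * P ^ h) * ((X + 1) / X) ^ h) by ring.
    apply Rmult_le_compat_l; auto. apply Rmult_le_pos; auto. apply Rmult_le_pos; lra.
Qed.

Lemma geom_dom (d : nat -> R) q : 0 <= q < 1 -> (forall n, 0 <= d n) ->
  (forall n, d (S (S n)) <= q * d (S n)) ->
  ex_series d /\ Series d <= d 0%nat + d 1%nat / (1 - q).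
Proof.
  intros Hq Hd Hr.
  assert (B : forall n, d (S n) <= d 1%nat * q ^ n).
  { induction n. simpl; lra. apply Rle_trans with (q * d (S n)); auto.
    simpl. assert (0 <= q) by lra. nra. }
  assert (G : ex_series (fun n => d 1%nat * q ^ n)).
  { apply (@ex_series_scal_l R_AbsRing R_NormedModule (d 1%nat) (fun n => q ^ n)). apply ex_series_geom. rewrite Rabs_pos_eq; lra. }
  assert (E1 : ex_series (fun n => d (S n))).
  {     apply (@ex_series_le R_AbsRing R_CompleteNormedModule (fun n => d (S n)) (fun n => d 1%nat * q ^ n)); auto.
    intros n. change (Rabs (d (S n)) <= d 1%nat * q ^ n). rewrite Rabs_pos_eq; auto. }
  assert (E : ex_series d) by (apply ex_series_incr_1; auto).
  split; auto.
  rewrite Series_incr_1 by auto.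
  apply Rplus_le_compat_l.
  apply Rle_trans with (Series (fun n => d 1%nat * q ^ n)).
  - apply Series_le; [intros n; split; auto | exact G].
  - rewrite Series_scal_l, Series_geom by (rewrite Rabs_pos_eq; lra). unfold Rdiv. lra.
Qed.

Lemma Series_zero : Series (fun _ : nat => 0) = 0.
Proof. transitivity (Series (fun n : nat => 0 * 0)). apply Series_ext; intros; ring. rewrite Series_scal_l. ring. Qed.

Lemma Series_nonneg' b : (forall n, 0 <= b n) -> ex_series b -> 0 <= Series b.
Proof. intros H E. rewrite <- Series_zero. apply Series_le; auto. intros; split; auto; lra. Qed.

Lemma Vc_real c s : Vc c (RtoC s) = RtoC (Series (fun n => c n * s ^ n)).
Proof.
  unfold Vc, CSeries. apply injective_projections; simpl.
  - apply Series_ext. intros n. unfold Cterm. rewrite <- RtoC_pow. simpl. ring.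
  - rewrite (Series_ext _ (fun _ => 0)). rewrite Series_zero. auto.
    intros n. unfold Cterm. rewrite <- RtoC_pow. simpl. ring.
Qed.

Lemma yA_le h : (2 <= h)%nat -> 1 / 2 ^ (h + 1) <= 1 / 8.
Proof.
  intros Hh. assert (8 <= 2 ^ (h + 1)).
  { replace 8 with (2 ^ 3) by (simpl; ring). apply Rle_pow. lra. lia. }
  unfold Rdiv. rewrite !Rmult_1_l. apply Rinv_le_contravar; lra.
Qed.

Lemma caseA_conv h : (2 <= h)%nat ->
  AC (cA h) (1 / 2 ^ (h + 1)) /\
  1 <= Series (fun n => cA h n * (1 / 2 ^ (h + 1)) ^ n) <= 9 / 5.
Proof.
  intros Hh. set (y := 1 / 2 ^ (h + 1)).
  assert (Hy : 0 < y) by (unfold y; apply Rdiv_lt_0_compat; [lra | apply pow_lt; lra]).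
  assert (Hy8 : y <= 1/8) by (apply yA_le; auto).
  assert (HK := KK_bound h Hh).
  set (q := KK h * y).
  assert (Hq : q <= 27/32) by (unfold q, y; unfold Rdiv in *; rewrite Rmult_1_l; auto).
  assert (HKp : 0 <= KK h).
  { unfold KK, Rdiv. assert (2 <= INR h) by (apply INR_ge2; auto).
    apply Rmult_le_pos. apply pow_le; lra. left; apply Rinv_0_lt_compat, pow_lt; lra. }
  assert (Hq0 : 0 <= q) by (unfold q; apply Rmult_le_pos; lra).
  set (d := fun n => Rabs (cA h n) * y ^ n).
  assert (Hd : forall n, 0 <= d n) by (intros; unfold d; apply Rmult_le_pos; [apply Rabs_pos | apply pow_le; lra]).
  assert (Hr : forall n, d (S (S n)) <= q * d (S n)).
  { intros n. unfold d. rewrite !Rabs_pos_eq by apply cA_pos.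
    assert (R := cA_ratio h n ltac:(lia)).
    change (y ^ S (S n)) with (y * y ^ S n). unfold q.
    assert (0 <= y ^ S n) by (apply pow_le; lra).
    replace (KK h * y * (cA h (S n) * y ^ S n)) with (KK h * cA h (S n) * (y * y ^ S n)) by ring.
    apply Rmult_le_compat_r; [apply Rmult_le_pos; lra | exact R]. }
  destruct (geom_dom d q ltac:(lra) Hd Hr) as [Ex Bd].
  split. exact Ex.
  assert (Ed : forall n, d n = cA h n * y ^ n) by (intros; unfold d; rewrite Rabs_pos_eq by apply cA_pos; auto).
  rewrite (Series_ext _ _ Ed) in Bd.
  assert (Ex' : ex_series (fun n => cA h n * y ^ n)) by (eapply ex_series_ext; [exact Ed| exact Ex]).
  split.
  - rewrite Series_incr_1 by auto. replace (cA h 0 * y ^ 0) with 1 by (unfold cA; simpl; ring).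
    assert (0 <= Series (fun k => cA h (S k) * y ^ (S k))).
    { apply Series_nonneg'. intros n. apply Rmult_le_pos. apply cA_pos. apply pow_le; lra.
      apply ex_series_incr_1 in Ex'. exact Ex'. }
    lra.
  - assert (D0 : d 0%nat = 1) by (unfold d, cA; simpl; rewrite Rabs_R1; ring).
    assert (D1 : d 1%nat = y) by (unfold d; rewrite cA_1, Rabs_R1; simpl; ring).
    rewrite D0, D1 in Bd.
    apply Rle_trans with (1 + y / (1 - q)); auto.
    apply Rle_trans with (1 + (1/8) / (5/32)); [|lra].
    apply Rplus_le_compat_l.
    unfold Rdiv. apply Rmult_le_compat; try lra. left; apply Rinv_0_lt_compat; lra.
    apply Rinv_le_contravar; lra.
Qed.

Lemma Rpower_pos a e : 0 < Rpower a e.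
Proof. unfold Rpower. apply exp_pos. Qed.

Lemma Rpower_pow_h a e h : 0 < a -> Rpower a e ^ h = Rpower a (e * INR h).
Proof. intros Ha. rewrite <- Rpower_pow by apply Rpower_pos. apply Rpower_mult. Qed.

Lemma KK_pos h : (1 <= h)%nat -> 0 < KK h.
Proof.
  intros Hh. unfold KK, Rdiv. assert (1 <= INR h) by (apply le_INR in Hh; simpl in Hh; lra).
  apply Rmult_lt_0_compat. apply pow_lt; lra. apply Rinv_0_lt_compat, pow_lt; lra.
Qed.

Definition QQ (h : nat) : R := Rpower (KK h) (1 / INR h).

Lemma QQ_pow h : (1 <= h)%nat -> QQ h ^ h = KK h.
Proof.
  intros Hh. unfold QQ. rewrite Rpower_pow_h by (apply KK_pos; auto).
  replace (1 / INR h * INR h) with 1. apply Rpower_1, KK_pos; auto.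
  assert (1 <= INR h) by (apply le_INR in Hh; simpl in Hh; lra). field. lra.
Qed.

Lemma caseB_conv h s : (2 <= h)%nat -> 0 <= s -> QQ h * s < 1 -> AC (A (tB h) (rB h)) s.
Proof.
  intros Hh Hs Hq. set (q := QQ h * s).
  assert (HQ : 0 < QQ h) by apply Rpower_pos.
  assert (Hq0 : 0 <= q) by (unfold q; apply Rmult_le_pos; lra).
  set (d := fun n => Rabs (A (tB h) (rB h) n) * s ^ n).
  assert (Hd : forall n, 0 <= d n) by (intros; unfold d; apply Rmult_le_pos; [apply Rabs_pos | apply pow_le; lra]).
  assert (Hr : forall n, d (S (S n)) <= q * d (S n)).
  { intros n. unfold d.
    assert (R := bB_ratio h n ltac:(lia)).
    assert (R2 : Rabs (A (tB h) (rB h) (S (S n))) * s <= q * Rabs (A (tB h) (rB h) (S n))).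
    { apply pow_le_root with h. apply Rmult_le_pos; [apply Rabs_pos | lra].
      apply Rmult_le_pos; [lra | apply Rabs_pos]. lia.
      unfold q. rewrite !Rpow_mult_distr. rewrite QQ_pow by lia.
      assert (0 <= s ^ h) by (apply pow_le; lra).
      replace (KK h * s ^ h * Rabs (A (tB h) (rB h) (S n)) ^ h) with ((KK h * Rabs (A (tB h) (rB h) (S n)) ^ h) * s ^ h) by ring.
      apply Rmult_le_compat_r; auto. }
    change (s ^ S (S n)) with (s * s ^ S n).
    assert (0 <= s ^ S n) by (apply pow_le; lra).
    replace (Rabs (A (tB h) (rB h) (S (S n))) * (s * s ^ S n)) with ((Rabs (A (tB h) (rB h) (S (S n))) * s) * s ^ S n) by ring.
    replace (q * (Rabs (A (tB h) (rB h) (S n)) * s ^ S n)) with ((q * Rabs (A (tB h) (rB h) (S n))) * s ^ S n) by ring.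
    apply Rmult_le_compat_r; auto. }
  destruct (geom_dom d q ltac:(unfold q in *; lra) Hd Hr) as [Ex _]. exact Ex.
Qed.

Definition yB (h : nat) : R := Rpower (1/2) ((INR h + 1) / INR h).

Lemma yB_pow h : (1 <= h)%nat -> yB h ^ h = 1 / 2 ^ (h + 1).
Proof.
  intros Hh. unfold yB. rewrite Rpower_pow_h by lra.
  assert (1 <= INR h) by (apply le_INR in Hh; simpl in Hh; lra).
  replace ((INR h + 1) / INR h * INR h) with (INR (h + 1)) by (rewrite plus_INR; simpl; field; lra).
  rewrite Rpower_pow by lra. unfold Rdiv. rewrite Rmult_1_l, pow_inv. ring.
Qed.

Lemma yB_pos h : 0 < yB h.
Proof. apply Rpower_pos. Qed.

Lemma QQ_yB h : (2 <= h)%nat -> QQ h * yB h < 1.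
Proof.
  intros Hh. assert (HQ : 0 < QQ h) by apply Rpower_pos. assert (Hy := yB_pos h).
  destruct (Rlt_le_dec (QQ h * yB h) 1) as [|Hc]; auto. exfalso.
  assert (H1 : 1 ^ h <= (QQ h * yB h) ^ h) by (apply pow_incr; lra).
  rewrite pow1, Rpow_mult_distr, QQ_pow, yB_pow in H1 by lia.
  assert (HK := KK_bound h Hh). unfold Rdiv in *. lra.
Qed.

Lemma bigger_s h : (2 <= h)%nat -> exists s, yB h < s /\ QQ h * s < 1.
Proof.
  intros Hh. assert (HQ : 0 < QQ h) by apply Rpower_pos. assert (H := QQ_yB h Hh).
  exists ((yB h + / QQ h) / 2). split.
  - assert (yB h < / QQ h).
    { apply Rmult_lt_reg_l with (QQ h); auto. rewrite Rinv_r by lra. lra. }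
    lra.
  - replace (QQ h * ((yB h + / QQ h) / 2)) with ((QQ h * yB h + 1) / 2) by (field; lra). lra.
Qed.

Lemma Cmod_sum_le (c : nat -> R) x N :
  Cmod (@sum_n C_AbelianMonoid (Cterm c x) N) <= sum_n (fun n => Rabs (c n) * Cmod x ^ n) N.
Proof.
  induction N.
  - rewrite !sum_O. rewrite Cmod_Cterm. lra.
  - rewrite !sum_Sn. change (Cmod (Cplus (sum_n (Cterm c x) N) (Cterm c x (S N))) <=
        sum_n (fun n => Rabs (c n) * Cmod x ^ n) N + Rabs (c (S N)) * Cmod x ^ S N).
    eapply Rle_trans. apply Cmod_triangle. rewrite Cmod_Cterm. lra.
Qed.

Lemma Cmod_Vc_le c x : AC c (Cmod x) -> Cmod (Vc c x) <= Series (fun n => Rabs (c n) * Cmod x ^ n).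
Proof.
  intros Hac. assert (H := Vc_correct c x Hac). unfold is_series in H.
  assert (H1 : is_lim_seq (fun N => Cmod (@sum_n C_AbelianMonoid (Cterm c x) N)) (Cmod (Vc c x))).
  { unfold is_lim_seq. simpl. eapply filterlim_comp. exact H. apply (@filterlim_norm C_AbsRing C_NormedModule). }
  assert (H2 : is_lim_seq (sum_n (fun n => Rabs (c n) * Cmod x ^ n)) (Series (fun n => Rabs (c n) * Cmod x ^ n))).
  { apply Series_correct in Hac. exact Hac. }
  assert (L := is_lim_seq_le _ _ _ _ (Cmod_sum_le c x) H1 H2). simpl in L. exact L.
Qed.

Lemma tB_rB_nz h : (1 <= h)%nat -> forall m, tB h * INR (S m) + rB h <> 0.
Proof.
  intros Hh m. unfold tB, rB. assert (1 <= INR h) by (apply le_INR in Hh; simpl in Hh; lra).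
  assert (0 <= INR m) by apply pos_INR.
  replace ((INR h + 1) / INR h * INR (S m) + - (1 / INR h)) with ((INR h * (INR m + 1) + INR m) / INR h)
    by (rewrite S_INR; field; lra).
  apply Rgt_not_eq. apply Rdiv_lt_0_compat; nra.
Qed.

Definition gR (h : nat) (s : R) : R := PSeries (A (tB h) (rB h)) s.

Lemma gR_Vc h s : Vc (A (tB h) (rB h)) (RtoC s) = RtoC (gR h s).
Proof.
  rewrite Vc_real. f_equal; try (unfold gR, PSeries; apply Series_ext; intros n;
  rewrite pow_n_pow; unfold scal; simpl; unfold mult; simpl; ring).
Qed.

Lemma gR_fun h s : (2 <= h)%nat -> 0 <= s -> QQ h * s < 1 -> gR h s - gR h s ^ (S h) = s.
Proof.
  intros Hh Hs Hq.
  assert (Hac : AC (A (tB h) (rB h)) (Cmod (RtoC s))).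
  { rewrite Cmod_R, Rabs_pos_eq by auto. apply caseB_conv; auto. }
  assert (HX : 0 < INR h) by (apply lt_0_INR; lia).
  assert (E := caseB_diff (tB h) (rB h) (RtoC s) h HX eq_refl eq_refl Hac).
  rewrite gR_Vc in E. rewrite <- RtoC_pow, <- RtoC_minus in E. apply RtoC_inj in E. exact E.
Qed.

Lemma radius_gt h : (2 <= h)%nat -> Rbar_lt (Finite (yB h)) (CV_radius (A (tB h) (rB h))).
Proof.
  intros Hh. destruct (bigger_s h Hh) as [s [Hs1 Hs2]].
  assert (Hy := yB_pos h).
  assert (Hac := caseB_conv h s Hh ltac:(lra) Hs2).
  destruct (Rbar_le_lt_dec (CV_radius (A (tB h) (rB h))) (Finite (yB h))) as [Hle|Hlt]; auto.
  exfalso.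
  assert (Hout : Rbar_lt (CV_radius (A (tB h) (rB h))) (Rabs s)).
  { rewrite Rabs_pos_eq by lra. eapply Rbar_le_lt_trans. exact Hle. simpl. exact Hs1. }
  apply (CV_disk_outside _ _ Hout). apply ex_series_lim_0.
  apply ex_series_Rabs. revert Hac. unfold AC. apply ex_series_ext. intros n.
  rewrite Rabs_mult, (Rabs_pos_eq (s ^ n)); auto. apply pow_le; lra.
Qed.

Lemma gR_cont h s : (2 <= h)%nat -> 0 <= s <= yB h -> continuity_pt (gR h) s.
Proof.
  intros Hh Hs. apply PSeries_continuity. rewrite Rabs_pos_eq by lra.
  eapply Rbar_le_lt_trans; [|apply radius_gt; auto]. simpl. lra.
Qed.

Fixpoint GS (a b : R) (n : nat) : R :=
  match n with O => 1 | S m => b * GS a b m + a ^ (S m) end.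

Lemma GS_factor a b n : a ^ (S n) - b ^ (S n) = (a - b) * GS a b n.
Proof.
  induction n.
  - simpl. ring.
  - change (GS a b (S n)) with (b * GS a b n + a ^ (S n)).
    replace (a ^ S (S n) - b ^ S (S n)) with (b * (a ^ S n - b ^ S n) + (a - b) * a ^ S n)
      by (simpl; ring).
    rewrite IHn. ring.
Qed.

Lemma GS_lb a b c n : 0 <= c -> c <= a -> c <= b -> b ^ n + INR n * c ^ n <= GS a b n.
Proof.
  intros Hc Ha Hb. induction n.
  - simpl. lra.
  - change (GS a b (S n)) with (b * GS a b n + a ^ (S n)).
    assert (H1 : c ^ S n <= a ^ S n) by (apply pow_incr; lra).
    assert (H0 : 0 <= b) by lra.
    assert (Hcn : 0 <= c ^ n) by (apply pow_le; lra).
    assert (H2 : c * c ^ n <= b * c ^ n) by (apply Rmult_le_compat_r; lra).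
    assert (HN : 0 <= INR n) by apply pos_INR.
    rewrite S_INR. simpl.
    assert (b * (b ^ n + INR n * c ^ n) <= b * GS a b n) by (apply Rmult_le_compat_l; lra).
    assert (INR n * (c * c ^ n) <= INR n * (b * c ^ n)) by (apply Rmult_le_compat_l; lra).
    simpl in H1. lra.
Qed.

Lemma Rpower_inv a e : 0 < a -> Rpower (/ a) e = / Rpower a e.
Proof. intros Ha. unfold Rpower. rewrite ln_Rinv by auto. rewrite <- exp_Ropp. f_equal. ring. Qed.

Definition gs (h : nat) : R := Rpower (INR h + 1) (- (1 / INR h)).
Definition vv (h : nat) : R := Rpower 2 (- (1 / INR h)).

Lemma INR_pos1 h : (1 <= h)%nat -> 1 <= INR h.
Proof. intros Hh. apply le_INR in Hh. simpl in Hh. lra. Qed.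

Lemma gs_pow h : (1 <= h)%nat -> gs h ^ h = / (INR h + 1).
Proof.
  intros Hh. assert (H1 := INR_pos1 h Hh). unfold gs. rewrite Rpower_pow_h by lra.
  replace (- (1 / INR h) * INR h) with (Ropp 1) by (field; lra).
  rewrite Rpower_Ropp, Rpower_1 by lra. auto.
Qed.

Lemma vv_pow h : (1 <= h)%nat -> vv h ^ h = / 2.
Proof.
  intros Hh. assert (H1 := INR_pos1 h Hh). unfold vv. rewrite Rpower_pow_h by lra.
  replace (- (1 / INR h) * INR h) with (Ropp 1) by (field; lra).
  rewrite Rpower_Ropp, Rpower_1 by lra. auto.
Qed.

Lemma yB_vv h : (1 <= h)%nat -> yB h = vv h / 2.
Proof.
  intros Hh. assert (H1 := INR_pos1 h Hh). unfold yB, vv.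
  replace (1 / 2) with (/ 2) by field. rewrite Rpower_inv by lra.
  replace ((INR h + 1) / INR h) with (- (- (1 / INR h)) + 1) by (field; lra).
  rewrite Rpower_plus, Rpower_Ropp, Rpower_1 by lra. field.
  apply Rgt_not_eq, Rpower_pos.
Qed.

Lemma vv_ge_gs h : (1 <= h)%nat -> gs h <= vv h.
Proof.
  intros Hh. assert (H1 := INR_pos1 h Hh). unfold gs, vv.
  rewrite !Rpower_Ropp. apply Rinv_le_contravar. apply Rpower_pos.
  apply Rle_Rpower_l. unfold Rdiv; rewrite Rmult_1_l; left; apply Rinv_0_lt_compat; lra. lra.
Qed.

Lemma gs_lt1 h : (1 <= h)%nat -> gs h < 1.
Proof.
  intros Hh. assert (H1 := INR_pos1 h Hh).
  destruct (Rlt_le_dec (gs h) 1) as [|Hc]; auto. exfalso.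
  assert (1 ^ h <= gs h ^ h) by (apply pow_incr; lra).
  rewrite pow1, gs_pow in H by auto.
  assert (/ (INR h + 1) < 1). { apply Rmult_lt_reg_l with (INR h + 1). lra. rewrite Rinv_r by lra. lra. }
  lra.
Qed.

Lemma vv_fun h : (1 <= h)%nat -> vv h - vv h ^ (S h) = yB h.
Proof.
  intros Hh. rewrite yB_vv by auto. simpl. rewrite vv_pow by auto. field.
Qed.

Lemma gR_0 h : gR h 0 = 1.
Proof. unfold gR. rewrite PSeries_0. reflexivity. Qed.

Lemma gR_ge_gs h : (2 <= h)%nat -> gs h <= gR h (yB h).
Proof.
  intros Hh. assert (H1 := INR_pos1 h ltac:(lia)). assert (Hy := yB_pos h).
  assert (Hg0 : 0 < gs h) by apply Rpower_pos.
  destruct (Rle_lt_dec (gs h) (gR h (yB h))) as [|Hlt]; auto. exfalso.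
  destruct (IVT_interv (fun s => gs h - gR h s) 0 (yB h)) as [z [Hz Fz]].
  - intros a Ha. apply continuity_pt_minus. apply continuity_pt_const. intros u v; auto.
    apply gR_cont; auto. lra.
  - auto.
  - rewrite gR_0. assert (H := gs_lt1 h ltac:(lia)). lra.
  - lra.
  - assert (Egz : gR h z = gs h) by lra.
    assert (HQ : QQ h * z < 1).
    { assert (0 < QQ h) by apply Rpower_pos. assert (Hq := QQ_yB h Hh).
      apply Rle_lt_trans with (QQ h * yB h); auto. apply Rmult_le_compat_l; lra. }
    assert (F := gR_fun h z Hh ltac:(lra) HQ). rewrite Egz in F.
    assert (E : gs h - gs h ^ S h = gs h * (INR h / (INR h + 1))).
    { simpl. rewrite gs_pow by lia. field. lra. }
    rewrite E in F.
    assert (Hbig : yB h < gs h * (INR h / (INR h + 1))).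
    { destruct (Rlt_le_dec (yB h) (gs h * (INR h / (INR h + 1)))) as [|Hc]; auto. exfalso.
      assert (P : (gs h * (INR h / (INR h + 1))) ^ h <= yB h ^ h).
      { apply pow_incr. split; auto. apply Rmult_le_pos; [lra|]. apply Rdiv_le_0_compat; lra. }
      rewrite Rpow_mult_distr, gs_pow, yB_pow in P by lia.
      assert (HK := KK_bound h Hh). unfold KK in HK.
      unfold Rdiv in P. rewrite Rpow_mult_distr, pow_inv in P.
      assert (0 < INR h ^ h) by (apply pow_lt; lra).
      assert (0 < (INR h + 1) ^ h) by (apply pow_lt; lra).
      assert (0 < 2 ^ (h + 1)) by (apply pow_lt; lra).
      replace ((INR h + 1) ^ (h + 1)) with ((INR h + 1) * (INR h + 1) ^ h) in HK
        by (rewrite Nat.add_comm; simpl; ring).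
      set (b := (INR h + 1) ^ h) in *. set (c := INR h ^ h) in *. set (d := 2 ^ (h+1)) in *. set (a := INR h + 1) in *.
      assert (Ha : 0 < a) by (unfold a; lra).
      assert (Hb : 0 < b) by (unfold b; apply pow_lt; lra).
      assert (Hc0 : 0 < c) by (unfold c; apply pow_lt; lra).
      assert (Hd : 0 < d) by (unfold d; apply pow_lt; lra).
      assert (P' : c * d <= a * b).
      { apply Rmult_le_reg_r with (/ a * / b * / d).
        apply Rmult_lt_0_compat. apply Rmult_lt_0_compat; apply Rinv_0_lt_compat; lra. apply Rinv_0_lt_compat; lra.
        replace (c * d * (/ a * / b * / d)) with (/ a * (c * / b)) by (field; repeat split; lra).
        replace (a * b * (/ a * / b * / d)) with (1 * / d) by (field; repeat split; lra). exact P. }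
      assert (HK' : a * b <= 27/32 * (c * d)).
      { apply Rmult_le_reg_r with (/ c * / d).
        apply Rmult_lt_0_compat; apply Rinv_0_lt_compat; lra.
        replace (27 / 32 * (c * d) * (/ c * / d)) with (27/32) by (field; split; lra).
        replace (a * b * (/ c * / d)) with (a * b / c / d) by (unfold Rdiv; ring). exact HK. }
      nra. }
    lra.
Qed.

Lemma gR_yB h : (2 <= h)%nat -> gR h (yB h) = vv h.
Proof.
  intros Hh. assert (H1 := INR_pos1 h ltac:(lia)).
  assert (Hge := gR_ge_gs h Hh). assert (Hv := vv_ge_gs h ltac:(lia)).
  assert (Hg0 : 0 < gs h) by apply Rpower_pos.
  assert (F1 := gR_fun h (yB h) Hh (Rlt_le _ _ (yB_pos h)) (QQ_yB h Hh)).
  assert (F2 := vv_fun h ltac:(lia)).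
  destruct (Req_dec (gR h (yB h)) (vv h)) as [|Hne]; auto. exfalso.
  assert (Fa := GS_factor (gR h (yB h)) (vv h) h).
  assert (G : GS (gR h (yB h)) (vv h) h = 1).
  { assert (E : (gR h (yB h) - vv h) * (GS (gR h (yB h)) (vv h) h - 1) = 0) by lra.
    apply Rmult_integral in E. destruct E as [E|E]; lra. }
  assert (L := GS_lb (gR h (yB h)) (vv h) (gs h) h ltac:(lra) Hge Hv).
  rewrite vv_pow, gs_pow in L by lia.
  assert (INR h * / (INR h + 1) >= 2/3).
  { apply Rle_ge. apply Rmult_le_reg_r with (3 * (INR h + 1)). lra.
    replace (INR h * / (INR h + 1) * (3 * (INR h + 1))) with (3 * INR h) by (field; lra).
    assert (2 <= INR h) by (apply INR_ge2; auto). lra. }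
  lra.
Qed.

Lemma A_neg h m : (1 <= h)%nat -> A (tB h) (rB h) (S m) <= 0.
Proof.
  intros Hh. rewrite A_B_form by auto. assert (H1 := INR_pos1 h Hh).
  assert (0 < PR (1 + INR m / INR h) m).
  { apply PR_pos. assert (0 <= INR m / INR h) by (apply Rdiv_le_0_compat; [apply pos_INR | lra]). lra. }
  assert (Hf := INR_fact_pos (S m)).
  assert (0 <= / INR h * PR (1 + INR m / INR h) m / INR (fact (S m))).
  { unfold Rdiv. apply Rmult_le_pos. apply Rmult_le_pos. left; apply Rinv_0_lt_compat; lra. lra.
    left; apply Rinv_0_lt_compat; lra. }
  lra.
Qed.

Lemma gR_Series h s : gR h s = Series (fun n => A (tB h) (rB h) n * s ^ n).
Proof. assert (E := gR_Vc h s). rewrite Vc_real in E. apply RtoC_inj in E. auto. Qed.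

Lemma AC_yB h : (2 <= h)%nat -> AC (A (tB h) (rB h)) (yB h).
Proof. intros Hh. apply caseB_conv; auto. left; apply yB_pos. apply QQ_yB; auto. Qed.

Lemma tail_abs h : (2 <= h)%nat ->
  Series (fun k => Rabs (A (tB h) (rB h) (S k)) * yB h ^ (S k)) = 1 - vv h.
Proof.
  intros Hh. assert (Hac := AC_yB h Hh). assert (Hy := yB_pos h).
  assert (Ex : ex_series (fun n => A (tB h) (rB h) n * yB h ^ n)).
  { apply ex_series_Rabs. revert Hac. unfold AC. apply ex_series_ext. intros n.
    rewrite Rabs_mult, (Rabs_pos_eq (yB h ^ n)); auto. apply pow_le; lra. }
  assert (G := gR_yB h Hh). rewrite gR_Series in G.
  rewrite Series_incr_1 in G by auto. simpl (A _ _ 0) in G. simpl (yB h ^ 0) in G.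
  rewrite (Series_ext _ (fun k => - (A (tB h) (rB h) (S k) * yB h ^ (S k)))).
  - rewrite Series_opp. lra.
  - intros n. rewrite Rabs_left1 by (apply A_neg; lia). ring.
Qed.

Lemma gj_close h x : (2 <= h)%nat -> Cmod x = yB h ->
  Cmod (Vc (A (tB h) (rB h)) x - RtoC 1) <= 1 - vv h.
Proof.
  intros Hh Hx. assert (Hac := AC_yB h Hh). rewrite <- Hx in Hac.
  rewrite <- (Vc_A0 (tB h) x). rewrite Vc_minus; auto; [|apply AC_A0].
  set (c := fun n => A (tB h) (rB h) n - A (tB h) 0 n).
  assert (Ec : forall n, Rabs (c n) * Cmod x ^ n = match n with O => 0 | S k => Rabs (A (tB h) (rB h) (S k)) * yB h ^ (S k) end).
  { intros n. unfold c. rewrite A_t0. destruct n; simpl.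
    - replace (1 - 1) with 0 by ring. rewrite Rabs_R0. ring.
    - rewrite Hx. rewrite Rminus_0_r. auto. }
  assert (Hacc : AC c (Cmod x)).
  { unfold AC. apply ex_series_ext with (fun n => match n with O => 0 | S k => Rabs (A (tB h) (rB h) (S k)) * yB h ^ (S k) end).
    intros; rewrite Ec; auto.
    apply ex_series_incr_1. unfold AC in Hac. apply ex_series_incr_1 in Hac. revert Hac. apply ex_series_ext.
    intros n. rewrite Hx. auto. }
  eapply Rle_trans. apply Cmod_Vc_le; auto.
  rewrite (Series_ext _ _ Ec). rewrite Series_incr_1.
  - cbv beta iota. rewrite tail_abs by auto. lra.
  - apply ex_series_ext with (fun n => Rabs (c n) * Cmod x ^ n); auto.
Qed.

Lemma Cmod_ge_v h x : (2 <= h)%nat -> Cmod x = yB h -> vv h <= Cmod (Vc (A (tB h) (rB h)) x).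
Proof.
  intros Hh Hx. assert (H := gj_close h x Hh Hx).
  assert (T := Cmod_triangle (Vc (A (tB h) (rB h)) x - RtoC 1) (RtoC 1)).
  replace (Vc (A (tB h) (rB h)) x - RtoC 1 + RtoC 1)%C with (Vc (A (tB h) (rB h)) x) in T by ring.
  rewrite Cmod_R, Rabs_R1 in T.
  assert (T2 := Cmod_triangle (Vc (A (tB h) (rB h)) x) (RtoC 1 - Vc (A (tB h) (rB h)) x)).
  replace (Vc (A (tB h) (rB h)) x + (RtoC 1 - Vc (A (tB h) (rB h)) x))%C with (RtoC 1) in T2 by ring.
  rewrite Cmod_R, Rabs_R1 in T2.
  replace (RtoC 1 - Vc (A (tB h) (rB h)) x)%C with (- (Vc (A (tB h) (rB h)) x - RtoC 1))%C in T2 by ring.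
  rewrite Cmod_opp in T2. lra.
Qed.

Definition c2 (h : nat) : R := Rpower 2 (1 / INR h).

Lemma vv_c2 h : vv h * c2 h = 1.
Proof. unfold vv, c2. rewrite Rpower_Ropp. rewrite Rinv_l. auto. apply Rgt_not_eq, Rpower_pos. Qed.

Lemma bernoulli x n : 0 <= x -> 1 + INR n * x <= (1 + x) ^ n.
Proof.
  intros Hx. induction n.
  - simpl. lra.
  - rewrite S_INR. simpl. assert (0 <= INR n) by apply pos_INR.
    assert (1 <= (1 + x) ^ n) by (apply pow_R1_Rle; lra). nra.
Qed.

Lemma c2_le h : (1 <= h)%nat -> c2 h <= 1 + 1 / INR h.
Proof.
  intros Hh. assert (H1 := INR_pos1 h Hh).
  apply pow_le_root with h. left; apply Rpower_pos. assert (0 < 1 / INR h) by (apply Rdiv_lt_0_compat; lra). lra. lia.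
  unfold c2. rewrite Rpower_pow_h by lra. replace (1 / INR h * INR h) with 1 by (field; lra).
  rewrite Rpower_1 by lra.
  assert (B := bernoulli (1 / INR h) h ltac:(apply Rlt_le, Rdiv_lt_0_compat; lra)).
  replace (INR h * (1 / INR h)) with 1 in B by (field; lra). lra.
Qed.

Lemma sin_cubic x : 0 <= x <= 2 -> x - x ^ 3 / 6 <= sin x.
Proof.
  intros Hx. assert (HP := PI2_3_2).
  destruct (SIN x) as [H _]; try lra.
  assert (E : sin_lb x = x - x^3/6 + x^5/120 - x^7/5040).
  { unfold sin_lb, sin_approx, sin_term. simpl. field. }
  rewrite E in H.
  assert (H5 : 0 <= x ^ 5) by (apply pow_le; lra).
  assert (E7 : x ^ 7 = x ^ 5 * (x * x)) by (simpl; ring).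
  assert (x * x <= 4) by nra.
  assert (x ^ 5 * (x * x) <= x ^ 5 * 4) by (apply Rmult_le_compat_l; lra).
  lra.
Qed.

Lemma sin_gt h : (2 <= h)%nat -> 1 / INR h < sin (PI / INR h).
Proof.
  intros Hh. assert (H2 := INR_ge2 h Hh). assert (HP := PI2_3_2). assert (HP4 := PI_4).
  set (x := PI / INR h).
  assert (Hx : 0 <= x <= 2) by (unfold x; split; [apply Rdiv_le_0_compat; lra | apply Rmult_le_reg_r with (INR h); [lra|]; unfold Rdiv; rewrite Rmult_assoc, Rinv_l; lra]).
  eapply Rlt_le_trans; [|apply sin_cubic; auto].
  replace (x - x ^ 3 / 6) with ((PI - PI ^ 3 / (6 * INR h ^ 2)) / INR h) by (unfold x; field; lra).
  apply Rmult_lt_compat_r. apply Rinv_0_lt_compat; lra.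
  assert (PI ^ 3 / (6 * INR h ^ 2) <= PI ^ 3 / 24).
  { unfold Rdiv. apply Rmult_le_compat_l. apply pow_le; lra. apply Rinv_le_contravar. lra. simpl. nra. }
  assert (PI ^ 3 <= 16 * PI) by (simpl; nra).
  lra.
Qed.

Lemma cos_le_first h m : (2 <= h)%nat -> (1 <= m < h)%nat -> cos (INR m * (2 * PI / INR h)) <= cos (2 * PI / INR h).
Proof.
  intros Hh Hm. assert (H2 := INR_ge2 h Hh). assert (HP := PI_RGT_0).
  assert (Hm1 : 1 <= INR m) by (apply INR_pos1; lia).
  assert (Hmh : INR m + 1 <= INR h) by (rewrite <- S_INR; apply le_INR; lia).
  set (a := 2 * PI / INR h).
  assert (Ha : 0 < a <= PI).
  { unfold a. split. apply Rdiv_lt_0_compat; lra. apply Rmult_le_reg_r with (INR h). lra.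
    unfold Rdiv. rewrite Rmult_assoc, Rinv_l by lra. nra. }
  assert (Hma : INR m * a <= 2 * PI - a).
  { unfold a. apply Rmult_le_reg_r with (INR h). lra. unfold Rdiv.
    replace (INR m * (2 * PI * / INR h) * INR h) with (INR m * (2 * PI)) by (field; lra).
    replace ((2 * PI - 2 * PI * / INR h) * INR h) with ((INR h - 1) * (2 * PI)) by (field; lra).
    apply Rmult_le_compat_r; lra. }
  destruct (Rle_lt_dec (INR m * a) PI) as [Hle|Hgt].
  - apply cos_decr_1; nra.
  - replace (cos (INR m * a)) with (cos (2 * PI - INR m * a)).
    + apply cos_decr_1; lra.
    + rewrite cos_minus, cos_2PI, sin_2PI. ring.
Qed.

Lemma zeta_sep h m : (2 <= h)%nat -> (1 <= m < h)%nat -> 2 / INR h < Cmod (Cpow (zeta h) m - RtoC 1).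
Proof.
  intros Hh Hm. assert (H2 := INR_ge2 h Hh).
  unfold zeta. rewrite Cpow_cis.
  set (th := INR m * (2 * PI / INR h)).
  assert (Hc := cos_le_first h m Hh Hm). fold th in Hc.
  assert (Hs := sin_gt h Hh).
  assert (Hcs : cos (2 * PI / INR h) = 1 - 2 * sin (PI / INR h) * sin (PI / INR h)).
  { rewrite <- cos_2a_sin. f_equal. field. lra. }
  unfold Cmod. simpl fst; simpl snd.
  rewrite <- (sqrt_pow2 (2 / INR h)) by (apply Rdiv_le_0_compat; lra).
  apply sqrt_lt_1. apply pow_le. apply Rdiv_le_0_compat; lra.
  assert (0 <= (cos th - 1) ^ 2) by (apply pow2_ge_0). assert (0 <= sin th ^ 2) by apply pow2_ge_0. lra.
  assert (Hss := sin2_cos2 th). unfold Rsqr in Hss.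
  assert (E : (cos th - 1) ^ 2 + sin th ^ 2 = 2 - 2 * cos th) by (simpl; nra).
  match goal with |- _ < ?R => replace R with (2 - 2 * cos th) by (rewrite <- E; simpl; ring) end.
  assert (0 < 1 / INR h) by (apply Rdiv_lt_0_compat; lra).
  replace ((2 / INR h) ^ 2) with (4 * (1 / INR h) * (1 / INR h)) by (simpl; field; lra).
  nra.
Qed.

Lemma sep (w g1 g2 : C) (v : R) : 0 < v ->
  Cmod (g1 - RtoC 1) <= 1 - v -> Cmod (g2 - RtoC 1) <= 1 - v -> g2 = (w * g1)%C ->
  Cmod (w - RtoC 1) <= 2 * (1 - v) / v.
Proof.
  intros Hv H1 H2 E.
  assert (Hg1 : v <= Cmod g1).
  { assert (T2 := Cmod_triangle g1 (RtoC 1 - g1)).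
    replace (g1 + (RtoC 1 - g1))%C with (RtoC 1) in T2 by ring.
    rewrite Cmod_R, Rabs_R1 in T2.
    replace (RtoC 1 - g1)%C with (- (g1 - RtoC 1))%C in T2 by ring.
    rewrite Cmod_opp in T2. lra. }
  assert (K : ((w - RtoC 1) * g1 = (g2 - RtoC 1) - (g1 - RtoC 1))%C) by (rewrite E; ring).
  assert (K2 : Cmod (w - RtoC 1) * Cmod g1 <= 2 * (1 - v)).
  { rewrite <- Cmod_mult, K. eapply Rle_trans. apply Cmod_triangle. rewrite Cmod_opp. lra. }
  apply Rmult_le_reg_r with v; auto.
  replace (2 * (1 - v) / v * v) with (2 * (1 - v)) by (field; lra).
  assert (0 <= Cmod (w - RtoC 1)) by apply Cmod_ge_0.
  eapply Rle_trans; [|exact K2]. apply Rmult_le_compat_l; auto.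
Qed.

Definition xj (h j : nat) : C := (Cpow (zeta h) j * RtoC (yB h))%C.
Definition gj (h j : nat) : C := Vc (A (tB h) (rB h)) (xj h j).

Lemma Cmod_xj h j : Cmod (xj h j) = yB h.
Proof. unfold xj. rewrite Cmod_mult, Cmod_zeta_pow, Cmod_R, Rabs_pos_eq. ring. left; apply yB_pos. Qed.

Lemma root_j_form h j : (2 <= h)%nat -> (j < h)%nat ->
  root_r h j = (/ Cpow (zeta h) j * RtoC (c2 h) * gj h j)%C.
Proof.
  intros Hh Hj. unfold root_r. replace (Nat.eqb j h) with false by (symmetry; apply Nat.eqb_neq; lia).
  unfold gj, c2, xj. rewrite Bpow_Vc. reflexivity. apply tB_rB_nz. lia.
Qed.

Lemma root_h_form h : root_r h h = (RtoC (1/2) * Vc (cA h) (RtoC (1 / 2 ^ (h + 1))))%C.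
Proof.
  unfold root_r. rewrite Nat.eqb_refl. rewrite Bpow_Vc. reflexivity.
  intros m. assert (0 <= INR h) by apply pos_INR. assert (0 <= INR m) by apply pos_INR.
  rewrite S_INR. nra.
Qed.

Lemma Cpow_RtoC a n : Cpow (RtoC a) n = RtoC (a ^ n).
Proof. rewrite RtoC_pow. reflexivity. Qed.

Lemma root_h_is_root h : (2 <= h)%nat ->
  (RtoC 1 - RtoC 2 * root_r h h + Cpow (root_r h h) (h + 1) = RtoC 0)%C.
Proof.
  intros Hh. rewrite root_h_form.
  destruct (caseA_conv h Hh) as [Hac _].
  set (y := 1 / 2 ^ (h + 1)) in *.
  assert (Hy : 0 < y) by (unfold y; apply Rdiv_lt_0_compat; [lra | apply pow_lt; lra]).
  assert (Hac' : AC (cA h) (Cmod (RtoC y))) by (rewrite Cmod_R, Rabs_pos_eq; [exact Hac | lra]).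
  assert (E := caseA_eq (INR h + 1) (h + 1) (RtoC y) ltac:(rewrite plus_INR; simpl; ring) Hac').
  set (B := Vc (cA h) (RtoC y)) in *.
  assert (E' : B = (RtoC 1 + RtoC y * Cpow B (h + 1))%C) by exact E. clear E.
  rewrite Cpow_mult_l, Cpow_RtoC.
  assert (Ey : RtoC ((1/2) ^ (h + 1)) = RtoC y).
  { f_equal. unfold y. unfold Rdiv. rewrite Rmult_1_l, Rmult_1_l, pow_inv. auto. }
  rewrite Ey.
  replace (RtoC 1 - RtoC 2 * (RtoC (1 / 2) * B) + RtoC y * Cpow B (h + 1))%C
    with (RtoC 1 - (RtoC 2 * RtoC (1/2)) * B + (RtoC 1 + RtoC y * Cpow B (h + 1)) - RtoC 1)%C by ring.
  rewrite <- E'. replace (RtoC 2 * RtoC (1/2))%C with (RtoC 1).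
  - ring.
  - rewrite <- RtoC_mult. f_equal. field.
Qed.

Lemma c2_pow h : (1 <= h)%nat -> c2 h ^ h = 2.
Proof.
  intros Hh. assert (H1 := INR_pos1 h Hh). unfold c2. rewrite Rpower_pow_h by lra.
  replace (1 / INR h * INR h) with 1 by (field; lra). apply Rpower_1. lra.
Qed.

Lemma root_j_is_root h j : (2 <= h)%nat -> (j < h)%nat ->
  (RtoC 1 - RtoC 2 * root_r h j + Cpow (root_r h j) (h + 1) = RtoC 0)%C.
Proof.
  intros Hh Hj. rewrite root_j_form by auto.
  assert (Hz := zeta_pow_nz h j).
  apply caseB_root with (x := xj h j).
  - rewrite Cpow_mult_l, Cpow_RtoC, c2_pow by lia.
    rewrite Cpow_inv by auto. rewrite <- Cpow_mult_r, Nat.mul_comm, Cpow_mult_r, zeta_pow_h by lia.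
    rewrite Cpow_1_l. field.
  - unfold xj. replace (/ Cpow (zeta h) j * RtoC (c2 h) * (Cpow (zeta h) j * RtoC (yB h)))%C
      with (RtoC (c2 h) * RtoC (yB h))%C by (field; auto).
    rewrite <- RtoC_mult. f_equal. rewrite yB_vv by lia.
    assert (V := vv_c2 h). lra.
  - unfold gj. apply caseB_diff. apply lt_0_INR; lia. reflexivity. reflexivity.
    rewrite Cmod_xj. apply AC_yB; auto.
Qed.

Lemma root_is_root h i : (2 <= h)%nat -> (i <= h)%nat ->
  (RtoC 1 - RtoC 2 * root_r h i + Cpow (root_r h i) (h + 1) = RtoC 0)%C.
Proof.
  intros Hh Hi. destruct (Nat.eq_dec i h) as [->|Hne].
  - apply root_h_is_root; auto.
  - apply root_j_is_root; auto. lia.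
Qed.

Lemma root_h_real h : (2 <= h)%nat -> exists rho, root_r h h = RtoC rho /\ 1/2 <= rho <= 9/10.
Proof.
  intros Hh. rewrite root_h_form. rewrite Vc_real.
  destruct (caseA_conv h Hh) as [_ Hb].
  eexists. split. rewrite <- RtoC_mult. reflexivity. lra.
Qed.

Lemma root_j_mod h j : (2 <= h)%nat -> (j < h)%nat -> 1 <= Cmod (root_r h j).
Proof.
  intros Hh Hj. rewrite root_j_form by auto.
  rewrite !Cmod_mult, Cmod_inv by apply zeta_pow_nz. rewrite Cmod_zeta_pow, Cmod_R, Rabs_pos_eq by (left; apply Rpower_pos).
  assert (G := Cmod_ge_v h (xj h j) Hh (Cmod_xj h j)). fold (gj h j) in G.
  assert (V := vv_c2 h). assert (0 < c2 h) by apply Rpower_pos.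
  rewrite Rinv_1. nra.
Qed.

Lemma roots_distinct h i k : (2 <= h)%nat -> (i <= h)%nat -> (k <= h)%nat -> i <> k ->
  root_r h i <> root_r h k.
Proof.
  intros Hh Hi Hk Hik.
  assert (Hcase : forall j, (j < h)%nat -> root_r h h <> root_r h j).
  { intros j Hj E. destruct (root_h_real h Hh) as [rho [Er Hr]].
    assert (M := root_j_mod h j Hh Hj). rewrite <- E, Er, Cmod_R, Rabs_pos_eq in M; lra. }
  destruct (Nat.eq_dec i h) as [->|Hi'].
  { apply Hcase. lia. }
  destruct (Nat.eq_dec k h) as [->|Hk'].
  { intros E. symmetry in E. revert E. apply Hcase. lia. }
  assert (Main : forall a b, (a < b < h)%nat -> root_r h a <> root_r h b).
  { intros a b Hab E. rewrite !root_j_form in E by lia.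
    assert (Ha := zeta_pow_nz h a). assert (Hb := zeta_pow_nz h b).
    assert (Hc2 : RtoC (c2 h) <> RtoC 0).
    { intros Z. apply (f_equal fst) in Z. simpl in Z. assert (0 < c2 h) by apply Rpower_pos. lra. }
    assert (Ez : Cpow (zeta h) b = (Cpow (zeta h) a * Cpow (zeta h) (b - a))%C).
    { rewrite <- Cpow_add_r. f_equal. lia. }
    assert (Eg : gj h b = (Cpow (zeta h) (b - a) * gj h a)%C).
    { assert (E2 : gj h b = (Cpow (zeta h) b * / Cpow (zeta h) a * gj h a)%C).
      { apply (f_equal (fun z => Cpow (zeta h) b * / RtoC (c2 h) * z)%C) in E.
        replace (Cpow (zeta h) b * / RtoC (c2 h) * (/ Cpow (zeta h) b * RtoC (c2 h) * gj h b))%C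
          with (gj h b) in E by (field; auto).
        rewrite <- E. field. split; auto. }
      rewrite E2, Ez. field. auto. }
    assert (Cl1 := gj_close h (xj h a) Hh (Cmod_xj h a)). fold (gj h a) in Cl1.
    assert (Cl2 := gj_close h (xj h b) Hh (Cmod_xj h b)). fold (gj h b) in Cl2.
    assert (Hv : 0 < vv h) by apply Rpower_pos.
    assert (S := sep _ _ _ _ Hv Cl1 Cl2 Eg).
    assert (Z := zeta_sep h (b - a) Hh ltac:(lia)).
    assert (C2 := c2_le h ltac:(lia)). assert (V := vv_c2 h).
    assert (2 * (1 - vv h) / vv h = 2 * (c2 h - 1)).
    { assert (Ec : c2 h = / vv h) by (apply Rmult_eq_reg_l with (vv h); [rewrite V, Rinv_r; lra | lra]).
      rewrite Ec. field. lra. }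
    assert (H2 := INR_ge2 h Hh).
    assert (2 * (c2 h - 1) <= 2 / INR h).
    { unfold Rdiv in *. lra. }
    lra. }
  destruct (Nat.lt_ge_cases i k).
  - apply Main. lia.
  - intros E. symmetry in E. revert E. apply Main. lia.
Qed.

Fixpoint isPC (d : nat) (p : C -> C) : Prop :=
  match d with
  | O => exists c, forall z, p z = c
  | S d' => exists q c, isPC d' q /\ forall z, p z = (z * q z + c)%C
  end.

Lemma isPC_ext d p q : isPC d p -> (forall z, p z = q z) -> isPC d q.
Proof.
  destruct d; simpl.
  - intros [c Hc] H. exists c. intros z. rewrite <- H. auto.
  - intros [q' [c [H1 H2]]] H. exists q', c. split; auto. intros z; rewrite <- H; auto.
Qed.

Lemma isPC_const d c : isPC d (fun _ => c).
Proof.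
  revert c. induction d; intros c; simpl.
  - exists c; auto.
  - exists (fun _ => RtoC 0), c. split. apply IHd. intros; ring.
Qed.

Lemma isPC_mono1 d p : isPC d p -> isPC (S d) p.
Proof.
  revert p; induction d; intros p H.
  - destruct H as [c Hc]. simpl. exists (fun _ => RtoC 0), c. split.
    + exists (RtoC 0); auto.
    + intros z; rewrite Hc; ring.
  - destruct H as [q [c [Hq Hp]]]. exists q, c. split; auto.
Qed.

Lemma isPC_mono d e p : (d <= e)%nat -> isPC d p -> isPC e p.
Proof. intros H; induction H; auto. intros Hp. apply isPC_mono1; auto. Qed.

Lemma isPC_plus d p q : isPC d p -> isPC d q -> isPC d (fun z => p z + q z)%C.
Proof.
  revert p q; induction d; intros p q Hp Hq.
  - destruct Hp as [c1 H1]; destruct Hq as [c2 H2]. exists (c1 + c2)%C. intros; rewrite H1, H2; auto.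
  - destruct Hp as [p1 [c1 [Hp1 H1]]]; destruct Hq as [q1 [c2 [Hq1 H2]]].
    exists (fun z => p1 z + q1 z)%C, (c1 + c2)%C. split; auto.
    intros; rewrite H1, H2; ring.
Qed.

Lemma isPC_scal d p c : isPC d p -> isPC d (fun z => c * p z)%C.
Proof.
  revert p; induction d; intros p Hp.
  - destruct Hp as [c1 H1]. exists (c * c1)%C. intros; rewrite H1; auto.
  - destruct Hp as [p1 [c1 [Hp1 H1]]].
    exists (fun z => c * p1 z)%C, (c * c1)%C. split; auto.
    intros; rewrite H1; ring.
Qed.

Lemma isPC_mulX d p : isPC d p -> isPC (S d) (fun z => z * p z)%C.
Proof. intros H. exists p, (RtoC 0). split; auto. intros; ring. Qed.

Lemma isPC_mul_lin d p a : isPC d p -> isPC (S d) (fun z => (z - a) * p z)%C.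
Proof.
  intros H. apply isPC_ext with (fun z => z * p z + (- a) * p z)%C.
  - apply isPC_plus. apply isPC_mulX; auto. apply isPC_mono1, isPC_scal; auto.
  - intros; ring.
Qed.

Lemma isPC_pow n : isPC n (fun z => Cpow z n).
Proof.
  induction n.
  - simpl. exists (RtoC 1). auto.
  - apply isPC_ext with (fun z => z * Cpow z n)%C. apply isPC_mulX; auto.
    intros; rewrite Cpow_S; auto.
Qed.

Lemma isPC_div d p : isPC (S d) p -> forall a, exists q, isPC d q /\ forall z, p z = ((z - a) * q z + p a)%C.
Proof.
  revert p; induction d; intros p Hp a.
  - destruct Hp as [q [c [[c0 Hq] Hp]]].
    exists (fun _ => c0). split. exists c0; auto.
    intros z. rewrite !Hp, !Hq. ring.
  - destruct Hp as [q [c [Hq Hp]]].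
    destruct (IHd q Hq a) as [q1 [Hq1 Hq1e]].
    exists (fun z => z * q1 z + q a)%C. split.
    + apply isPC_plus. apply isPC_mulX; auto. apply isPC_const.
    + intros z. rewrite !Hp, (Hq1e z). ring.
Qed.

Lemma Cmult_integral' (x y : C) : (x * y = RtoC 0)%C -> x <> RtoC 0 -> y = RtoC 0.
Proof.
  intros H Hx. replace y with (/ x * (x * y))%C by (field; auto). rewrite H. ring.
Qed.

Lemma isPC_zero d : forall p (pts : nat -> C), isPC d p ->
  (forall i j, (i <= d)%nat -> (j <= d)%nat -> i <> j -> pts i <> pts j) ->
  (forall i, (i <= d)%nat -> p (pts i) = RtoC 0) -> forall z, p z = RtoC 0.
Proof.
  induction d; intros p pts Hp Hd Hz z.
  - destruct Hp as [c Hc]. rewrite Hc. rewrite <- (Hc (pts 0%nat)). apply Hz; lia.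
  - destruct (isPC_div d p Hp (pts 0%nat)) as [q [Hq Hqe]].
    assert (Hpa : p (pts 0%nat) = RtoC 0) by (apply Hz; lia).
    assert (Hq0 : forall z, q z = RtoC 0).
    { apply (IHd q (fun i => pts (S i)) Hq).
      - intros i j Hi Hj Hij. apply Hd; lia.
      - intros i Hi. assert (H := Hz (S i) ltac:(lia)). rewrite Hqe, Hpa in H.
        apply Cmult_integral' with (pts (S i) - pts 0%nat)%C.
        + rewrite <- H. ring.
        + intros E. apply (Hd (S i) 0%nat); try lia.
          replace (pts (S i)) with ((pts (S i) - pts 0%nat) + pts 0%nat)%C by ring. rewrite E. ring. }
    rewrite Hqe, Hpa, Hq0. ring.
Qed.

Lemma cprod_monic (f : nat -> C) m : exists g, isPC m g /\
  forall z, cprod (fun i => z - f i)%C (S m) = (Cpow z (S m) + g z)%C.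
Proof.
  induction m.
  - exists (fun _ => - f 0%nat)%C. split. exists (- f 0%nat)%C; auto.
    intros z. simpl. ring.
  - destruct IHm as [g [Hg Hge]].
    exists (fun z => - f (S m) * Cpow z (S m) + z * g z - f (S m) * g z)%C. split.
    + apply isPC_plus. apply isPC_plus. apply isPC_scal, isPC_pow. apply isPC_mulX; auto.
      apply isPC_ext with (fun z => (- f (S m)) * g z)%C. apply isPC_mono1, isPC_scal; auto. intros; ring.
    + intros z. change (cprod (fun i => z - f i)%C (S (S m))) with (cprod (fun i => z - f i)%C (S m) * (z - f (S m)))%C.
      rewrite Hge. rewrite (Cpow_S z (S m)). ring.
Qed.

Lemma cprod_zero (f : nat -> C) k N : (k < N)%nat -> f k = RtoC 0 -> cprod f N = RtoC 0.
Proof.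
  intros Hk Hf. induction N; [lia|].
  simpl. destruct (Nat.eq_dec k N) as [->|Hne].
  - rewrite Hf. ring.
  - rewrite IHN by lia. ring.
Qed.

Theorem factorization (h : nat) (r : nat -> C) : (1 <= h)%nat ->
  (forall i j, (i <= h)%nat -> (j <= h)%nat -> i <> j -> r i <> r j) ->
  (forall i, (i <= h)%nat -> (RtoC 1 - RtoC 2 * r i + Cpow (r i) (h + 1))%C = RtoC 0) ->
  forall z, (RtoC 1 - RtoC 2 * z + Cpow z (h + 1))%C = cprod (fun i => z - r i)%C (h + 1).
Proof.
  intros Hh1 Hd Hr z.
  destruct (cprod_monic r h) as [g [Hg Hge]].
  set (D := (fun z => (RtoC 1 - RtoC 2 * z + Cpow z (h + 1)) - cprod (fun i => z - r i) (h + 1))%C).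
  assert (HD : isPC h D).
  { apply isPC_ext with (fun z => (RtoC 1 + (- RtoC 2) * z) + (- RtoC 1) * g z)%C.
    - apply isPC_plus.
      + apply isPC_mono with 1%nat. lia.
        exists (fun _ => (- RtoC 2)%C), (RtoC 1). split. exists (- RtoC 2)%C; auto. intros; ring.
      + apply isPC_scal; auto.
    - intros w. unfold D. replace (h + 1)%nat with (S h) by lia. rewrite Hge. ring. }
  assert (Z := isPC_zero h D r HD Hd).
  assert (HZ : forall i, (i <= h)%nat -> D (r i) = RtoC 0).
  { intros i Hi. unfold D. rewrite Hr by auto. rewrite (cprod_zero _ i) by (try lia; ring). ring. }
  assert (E := Z HZ z). unfold D in E.
  replace (cprod (fun i => z - r i)%C (h + 1)) with
    ((RtoC 1 - RtoC 2 * z + Cpow z (h + 1)) - ((RtoC 1 - RtoC 2 * z + Cpow z (h + 1)) - cprod (fun i => z - r i)%C (h + 1)))%C by ring.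
  rewrite E. ring.
Qed.

Lemma cprod_ext_lt (f g : nat -> C) N : (forall j, (j < N)%nat -> f j = g j) -> cprod f N = cprod g N.
Proof. induction N; intros H; simpl; auto. rewrite IHN by (intros; apply H; lia). rewrite H by lia. auto. Qed.

Lemma csum_ext_lt (f g : nat -> C) N : (forall j, (j < N)%nat -> f j = g j) -> csum f N = csum g N.
Proof. induction N; intros H; simpl; auto. rewrite IHN by (intros; apply H; lia). rewrite H by lia. auto. Qed.

Lemma cprod_extract (f : nat -> C) i N : (i < N)%nat ->
  cprod f N = (f i * cprod (fun j => if Nat.eqb j i then RtoC 1 else f j) N)%C.
Proof.
  induction N; intros Hi; [lia|].
  simpl. destruct (Nat.eq_dec i N) as [->|Hne].
  - rewrite Nat.eqb_refl. rewrite (cprod_ext_lt (fun j => if Nat.eqb j N then RtoC 1 else f j) f).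
    ring. intros j Hj. replace (Nat.eqb j N) with false by (symmetry; apply Nat.eqb_neq; lia). auto.
  - rewrite IHN by lia. replace (Nat.eqb N i) with false by (symmetry; apply Nat.eqb_neq; lia). ring.
Qed.

Lemma cprod_mult (f g : nat -> C) N : cprod (fun j => f j * g j)%C N = (cprod f N * cprod g N)%C.
Proof. induction N; simpl. ring. rewrite IHN. ring. Qed.

Lemma cprod_one (f : nat -> C) N : (forall j, (j < N)%nat -> f j = RtoC 1) -> cprod f N = RtoC 1.
Proof. induction N; intros H; simpl; auto. rewrite IHN by (intros; apply H; lia). rewrite H by lia. ring. Qed.

Lemma cprod_nz (f : nat -> C) N : (forall j, (j < N)%nat -> f j <> RtoC 0) -> cprod f N <> RtoC 0.
Proof.
  induction N; intros H; simpl.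
  - intros E. apply (f_equal fst) in E. simpl in E. lra.
  - intros E. assert (H1 := IHN (fun j Hj => H j ltac:(lia))). assert (H2 := H N ltac:(lia)).
    apply H2. apply Cmult_integral' with (cprod f N); auto.
Qed.

Lemma csum_single (f : nat -> C) k N : (k < N)%nat -> (forall j, (j < N)%nat -> j <> k -> f j = RtoC 0) ->
  csum f N = f k.
Proof.
  induction N; intros Hk H; [lia|]. simpl.
  destruct (Nat.eq_dec k N) as [->|Hne].
  - rewrite (csum_ext_lt f (fun _ => RtoC 0)). 2: { intros j Hj. apply H; lia. }
    assert (Z : forall M, csum (fun _ => RtoC 0) M = RtoC 0) by (induction M; simpl; [ring | rewrite IHM; ring]).
    rewrite Z. ring.
  - rewrite IHN by (auto; lia). rewrite (H N) by lia. ring.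
Qed.

Lemma csum_scal (f : nat -> C) c N : csum (fun i => f i * c)%C N = (csum f N * c)%C.
Proof. induction N; simpl. ring. rewrite IHN. ring. Qed.

Lemma isPC_csum d (f : nat -> C -> C) N : (forall i, (i < N)%nat -> isPC d (f i)) ->
  isPC d (fun z => csum (fun i => f i z) N).
Proof.
  induction N; intros H; simpl.
  - apply isPC_const.
  - apply isPC_plus. apply IHN; intros; apply H; lia. apply H; lia.
Qed.

Section PF.
Variable (r : nat -> C) (h : nat).

Definition wgt (i : nat) : C := cprod (fun j => if Nat.eqb j i then RtoC 1 else (/ (r i - r j))%C) (h + 1).
Definition Pex (i : nat) (z : C) : C := cprod (fun j => if Nat.eqb j i then RtoC 1 else (z - r j)%C) (h + 1).

Lemma Pex_deg_all i N : isPC N (fun z => cprod (fun j => if Nat.eqb j i then RtoC 1 else (z - r j)%C) N).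
Proof.
  induction N.
  - simpl. exists (RtoC 1); auto.
  - destruct (Nat.eq_dec N i) as [->|Hne].
    + apply isPC_ext with (fun z => cprod (fun j => if Nat.eqb j i then RtoC 1 else (z - r j)%C) i).
      apply isPC_mono1; auto. intros z. simpl. rewrite Nat.eqb_refl. ring.
    + apply isPC_ext with (fun z => (z - r N) * cprod (fun j => if Nat.eqb j i then RtoC 1 else (z - r j)%C) N)%C.
      apply isPC_mul_lin; auto. intros z. simpl. replace (Nat.eqb N i) with false by (symmetry; apply Nat.eqb_neq; auto). ring.
Qed.

Lemma Pex_deg_lt i N : (i < N)%nat -> isPC (N - 1) (fun z => cprod (fun j => if Nat.eqb j i then RtoC 1 else (z - r j)%C) N).
Proof.
  induction N; intros Hi; [lia|].
  destruct (Nat.eq_dec N i) as [->|Hne].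
  - apply isPC_ext with (fun z => cprod (fun j => if Nat.eqb j i then RtoC 1 else (z - r j)%C) i).
    replace (S i - 1)%nat with i by lia. apply Pex_deg_all. intros z. simpl. rewrite Nat.eqb_refl. ring.
  - apply isPC_ext with (fun z => (z - r N) * cprod (fun j => if Nat.eqb j i then RtoC 1 else (z - r j)%C) N)%C.
    replace (S N - 1)%nat with (S (N - 1)) by lia. apply isPC_mul_lin; auto. apply IHN. lia.
    intros z. simpl. replace (Nat.eqb N i) with false by (symmetry; apply Nat.eqb_neq; auto). ring.
Qed.

Hypothesis Hdist : forall i j, (i <= h)%nat -> (j <= h)%nat -> i <> j -> r i <> r j.

Lemma lagrange z : csum (fun i => wgt i * Pex i z)%C (h + 1) = RtoC 1.
Proof.
  set (D := (fun z => csum (fun i => wgt i * Pex i z) (h + 1) - RtoC 1)%C).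
  assert (HD : isPC h D).
  { apply isPC_ext with (fun z => csum (fun i => wgt i * Pex i z)%C (h + 1) + (- RtoC 1))%C.
    - apply isPC_plus. apply isPC_csum. intros i Hi. apply isPC_scal.
      unfold Pex. replace h with (h + 1 - 1)%nat at 1 by lia. apply Pex_deg_lt; auto.
      apply isPC_const.
    - intros; unfold D; ring. }
  assert (HZ : forall k, (k <= h)%nat -> D (r k) = RtoC 0).
  { intros k Hk. unfold D.
    assert (Oth : forall j, (j < h + 1)%nat -> j <> k -> (wgt j * Pex j (r k))%C = RtoC 0).
    { intros j Hj Hjk. unfold Pex. rewrite (cprod_zero _ k). ring. lia.
      replace (Nat.eqb k j) with false by (symmetry; apply Nat.eqb_neq; auto). ring. }
    rewrite (csum_single _ k) by (auto; lia).
    unfold wgt, Pex. rewrite <- cprod_mult. rewrite cprod_one. ring.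
    intros j Hj. destruct (Nat.eqb j k) eqn:E. ring.
    apply Nat.eqb_neq in E. field. intros Z. apply (Hdist k j); try lia.
    replace (r k) with ((r k - r j) + r j)%C by ring. rewrite Z. ring. }
  assert (E := isPC_zero h D r HD Hdist HZ z). unfold D in E.
  replace (csum (fun i => wgt i * Pex i z)%C (h + 1)) with
    ((csum (fun i => wgt i * Pex i z) (h + 1) - RtoC 1) + RtoC 1)%C by ring.
  rewrite E. ring.
Qed.

Lemma partial_fraction z : (forall i, (i <= h)%nat -> z <> r i) ->
  (/ cprod (fun i => z - r i)%C (h + 1))%C = csum (fun i => wgt i / (z - r i))%C (h + 1).
Proof.
  intros Hz.
  assert (HP : cprod (fun i => z - r i)%C (h + 1) <> RtoC 0).
  { apply cprod_nz. intros j Hj E. apply (Hz j). lia. replace z with ((z - r j) + r j)%C by ring. rewrite E. ring. }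
  rewrite (csum_ext_lt _ (fun i => (wgt i * Pex i z) * / cprod (fun i => z - r i)%C (h + 1))%C).
  - rewrite csum_scal. rewrite lagrange. ring.
  - intros i Hi. rewrite (cprod_extract (fun i => z - r i)%C i) by auto. fold (Pex i z).
    assert (z - r i <> RtoC 0)%C.
    { intros E. apply (Hz i). lia. replace z with ((z - r i) + r i)%C by ring. rewrite E. ring. }
    assert (Pex i z <> RtoC 0).
    { intros E. apply HP. rewrite (cprod_extract (fun i => z - r i)%C i) by lia. fold (Pex i z). rewrite E. ring. }
    field. auto.
Qed.

End PF.

Lemma geom_sum_C q N : q <> RtoC 1 ->
  @sum_n C_AbelianMonoid (fun n => Cpow q n) N = ((RtoC 1 - Cpow q (S N)) / (RtoC 1 - q))%C.
Proof.
  intros Hq. assert (H1 : (RtoC 1 - q)%C <> RtoC 0).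
  { intros E. apply Hq. replace q with (RtoC 1 - (RtoC 1 - q))%C by ring. rewrite E. ring. }
  induction N.
  - rewrite sum_O. change (Cpow q 0 = (RtoC 1 - Cpow q 1) / (RtoC 1 - q))%C. simpl. field. auto.
  - rewrite sum_Sn, IHN.
    change ((RtoC 1 - Cpow q (S N)) / (RtoC 1 - q) + Cpow q (S N) = (RtoC 1 - Cpow q (S (S N))) / (RtoC 1 - q))%C.
    rewrite (Cpow_S q (S N)). field. auto.
Qed.

Lemma is_series_geomC q : Cmod q < 1 ->
  @is_series C_AbsRing C_NormedModule (fun n => Cpow q n) (/ (RtoC 1 - q))%C.
Proof.
  intros Hq.
  assert (Hq1 : q <> RtoC 1).
  { intros E. rewrite E, Cmod_R, Rabs_R1 in Hq. lra. }
  assert (H1 : (RtoC 1 - q)%C <> RtoC 0).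
  { intros E. apply Hq1. replace q with (RtoC 1 - (RtoC 1 - q))%C by ring. rewrite E. ring. }
  assert (Hm : 0 < Cmod (RtoC 1 - q)) by (apply Cmod_gt_0; auto).
  unfold is_series. apply (proj2 (@filterlim_locally nat C_NormedModule eventually _ _ _)).
  intros eps.
  assert (G := is_lim_seq_geom (Cmod q) ltac:(rewrite Rabs_pos_eq by apply Cmod_ge_0; auto)).
  unfold is_lim_seq in G. simpl in G.
  pose proof (proj1 (@filterlim_locally nat R_NormedModule eventually _ (fun n => Cmod q ^ n) 0) G) as G'. clear G. rename G' into G.
  assert (Hep : 0 < eps * Cmod (RtoC 1 - q)) by (apply Rmult_lt_0_compat; [apply cond_pos | auto]).
  destruct (G (mkposreal _ Hep)) as [N0 HN0].
  exists N0. intros n Hn. apply norm_compat1.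
  change (Cmod (sum_n (fun n => Cpow q n) n - / (RtoC 1 - q))%C < eps).
  rewrite geom_sum_C by auto.
  replace ((RtoC 1 - Cpow q (S n)) / (RtoC 1 - q) - / (RtoC 1 - q))%C
    with (- Cpow q (S n) / (RtoC 1 - q))%C by (field; auto).
  unfold Cdiv. rewrite Cmod_mult, Cmod_opp, Cmod_inv, Cmod_pow by auto.
  assert (B := HN0 (S n) ltac:(lia)). simpl in B. unfold ball in B; simpl in B. unfold AbsRing_ball in B; simpl in B.
  unfold abs, minus, plus, opp in B; simpl in B. rewrite Ropp_0, Rplus_0_r in B.
  change (Cmod q * Cmod q ^ n) with (Cmod q ^ S n) in B.
  rewrite Rabs_pos_eq in B by (apply pow_le, Cmod_ge_0).
  apply Rmult_lt_reg_r with (Cmod (RtoC 1 - q)); auto.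
  rewrite Rmult_assoc, Rinv_l by lra. rewrite Rmult_1_r. exact B.
Qed.

Lemma is_series_csum (f : nat -> nat -> C) (l : nat -> C) N :
  (forall i, (i < N)%nat -> @is_series C_AbsRing C_NormedModule (f i) (l i)) ->
  @is_series C_AbsRing C_NormedModule (fun k => csum (fun i => f i k) N) (csum l N).
Proof.
  induction N; intros H.
  - simpl. pose proof (is_series_finite (fun _ => RtoC 0) 0 (fun n _ => eq_refl)) as K.
    rewrite sum_O in K. exact K.
  - simpl. apply (@is_series_plus C_AbsRing C_NormedModule). apply IHN; intros; apply H; lia. apply H; lia.
Qed.

Lemma csum_lin (f : nat -> C) c N : csum (fun i => c * f i)%C N = (c * csum f N)%C.
Proof. induction N; simpl. ring. rewrite IHN. ring. Qed.

Section EXP.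
Variable (r : nat -> C) (h : nat) (rho : R).
Hypothesis Hrho : 0 < rho.
Hypothesis Hr : forall i, (i <= h)%nat -> rho <= Cmod (r i).
Hypothesis Hdist : forall i j, (i <= h)%nat -> (j <= h)%nat -> i <> j -> r i <> r j.

Definition bcoef (n : nat) : C :=
  (- csum (fun i => / Cpow (r i) (n + 1) * wgt r h i) (h + 1))%C.

Lemma expansion_generic z : Cmod z < rho ->
  @is_pseries C_AbsRing C_NormedModule bcoef z (/ cprod (fun i => z - r i) (h + 1))%C.
Proof.
  intros Hz.
  assert (Hrz : forall i, (i <= h)%nat -> Cmod z < Cmod (r i)) by (intros; eapply Rlt_le_trans; eauto).
  assert (Hr0 : forall i, (i <= h)%nat -> r i <> RtoC 0).
  { intros i Hi E. assert (H := Hr i Hi). rewrite E, Cmod_0 in H. lra. }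
  assert (Hne : forall i, (i <= h)%nat -> z <> r i).
  { intros i Hi E. assert (H := Hrz i Hi). rewrite E in H. lra. }
  rewrite partial_fraction by auto.
  unfold is_pseries.
  apply is_series_ext with (fun k => csum (fun i => (- (wgt r h i / r i)) * Cpow (z / r i) k)%C (h + 1)).
  - intros k. change (csum (fun i => - (wgt r h i / r i) * Cpow (z / r i) k)%C (h + 1) =
        Cpow z k * bcoef k)%C.
    unfold bcoef.
    replace (Cpow z k * - csum (fun i => / Cpow (r i) (k + 1) * wgt r h i) (h + 1))%C
      with (csum (fun i => (- Cpow z k) * (/ Cpow (r i) (k + 1) * wgt r h i)) (h + 1))%C
      by (rewrite csum_lin; ring).
    apply csum_ext_lt. intros i Hi. assert (Hri := Hr0 i ltac:(lia)).
    unfold Cdiv. rewrite Cpow_mult_l, Cpow_inv by auto. replace (k + 1)%nat with (S k) by lia.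
    rewrite Cpow_S. field. split; auto. apply Cpow_nz; auto.
  - apply is_series_ext with (fun k => csum (fun i => (- (wgt r h i / r i)) * Cpow (z / r i) k)%C (h + 1)); auto.
    replace (csum (fun i => wgt r h i / (z - r i))%C (h + 1))
      with (csum (fun i => (- (wgt r h i / r i)) * / (RtoC 1 - z / r i))%C (h + 1)).
    + apply is_series_csum. intros i Hi.
      apply (@is_series_scal C_AbsRing C_NormedModule (- (wgt r h i / r i))%C (fun k => Cpow (z / r i) k)).
      apply is_series_geomC. unfold Cdiv. rewrite Cmod_mult, Cmod_inv by (apply Hr0; lia).
      assert (H := Hrz i ltac:(lia)). assert (0 < Cmod (r i)) by (apply Cmod_gt_0, Hr0; lia).
      apply Rmult_lt_reg_r with (Cmod (r i)); auto. rewrite Rmult_assoc, Rinv_l by lra. lra.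
    + apply csum_ext_lt. intros i Hi. assert (Hri := Hr0 i ltac:(lia)). assert (Hzi := Hne i ltac:(lia)).
      assert (Hd : (z - r i)%C <> RtoC 0).
      { intros E. apply Hzi. replace z with ((z - r i) + r i)%C by ring. rewrite E. ring. }
      assert (Hd2 : (r i - z)%C <> RtoC 0).
      { intros E. apply Hd. replace (z - r i)%C with (- (r i - z))%C by ring. rewrite E. ring. }
      assert (Hd3 : (RtoC 1 - z / r i)%C <> RtoC 0).
      { replace (r i - z)%C with (r i * (RtoC 1 - z / r i))%C in Hd2 by (field; auto).
        intros E. apply Hd2. rewrite E. ring. }
      field. repeat split; auto.
Qed.

End EXP.

Lemma real_coef_zero (c : nat -> R) rho : 0 < rho ->
  (forall s, Rabs s < rho -> is_pseries c s 0) -> forall n, c n = 0.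
Proof.
  intros Hrho H n.
  set (s0 := rho / 2).
  assert (Hs0 : Rabs s0 < rho) by (unfold s0; rewrite Rabs_pos_eq; lra).
  assert (Hrad : Rbar_lt 0 (CV_radius c)).
  { assert (H0 := H s0 Hs0). unfold is_pseries in H0.
    assert (L : is_lim_seq (fun k => scal (pow_n s0 k) (c k)) 0).
    { apply ex_series_lim_0. exists 0. exact H0. }
    destruct (filterlim_bounded (fun k => scal (pow_n s0 k) (c k))) as [M HM].
    { exists 0. exact L. }
    destruct (CV_radius_bounded c) as [Hub _].
    assert (Hle : Rbar_le s0 (CV_radius c)).
    { apply Hub. exists M. intros k. assert (HMk := HM k).
      change (Rabs (pow_n s0 k * c k) <= M) in HMk. rewrite pow_n_pow in HMk.
      rewrite Rmult_comm. exact HMk. }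
    eapply Rbar_lt_le_trans; [|exact Hle]. simpl. unfold s0. lra. }
  assert (Hz : forall t, Rabs t < rho -> PSeries c t = 0).
  { intros t Ht. apply is_pseries_unique. apply H; auto. }
  assert (D := Derive_n_coef c n Hrad).
  rewrite (Derive_n_ext_loc _ (fun _ => 0)) in D.
  - assert (D0 : c n * INR (fact n) = 0).
    { rewrite <- D. destruct n. reflexivity. apply Derive_n_const. }
    clear D. rename D0 into D. assert (Hf := INR_fact_pos n).
    assert (E : c n * INR (fact n) = 0) by lra.
    apply Rmult_integral in E. destruct E as [E|E]; auto. lra.
  - exists (mkposreal rho Hrho). intros t Ht. apply Hz.
    unfold ball in Ht; simpl in Ht. unfold AbsRing_ball, abs, minus, plus, opp in Ht; simpl in Ht.
    rewrite Ropp_0, Rplus_0_r in Ht. exact Ht.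
Qed.

Lemma to_pseries (c : nat -> R) s : is_series (fun k => s ^ k * c k) 0 -> is_pseries c s 0.
Proof. intros H. unfold is_pseries. revert H. apply is_series_ext. intros k.
  rewrite <- (pow_n_pow s k). reflexivity. Qed.

Lemma Cpow_RtoC_aux a n : Cpow (RtoC a) n = RtoC (a ^ n).
Proof. rewrite RtoC_pow. reflexivity. Qed.

Lemma pseries_unique_C (a b : nat -> C) rho (F : C -> C) : 0 < rho ->
  (forall z, Cmod z < rho -> @is_pseries C_AbsRing C_NormedModule a z (F z)) ->
  (forall z, Cmod z < rho -> @is_pseries C_AbsRing C_NormedModule b z (F z)) ->
  forall n, a n = b n.
Proof.
  intros Hrho Ha Hb.
  assert (K : forall s, Rabs s < rho ->
     is_series (fun k => s ^ k * (fst (a k) - fst (b k))) 0 /\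
     is_series (fun k => s ^ k * (snd (a k) - snd (b k))) 0).
  { intros s Hs. assert (Hc : Cmod (RtoC s) < rho) by (rewrite Cmod_R; auto).
    assert (H := is_series_minus _ _ _ _ (Ha _ Hc) (Hb _ Hc)).
    apply is_series_C_iff in H. destruct H as [H1 H2].
    match type of H1 with is_series _ ?L => replace L with 0 in H1 by (unfold minus, plus, opp; simpl; ring) end.
    match type of H2 with is_series _ ?L => replace L with 0 in H2 by (unfold minus, plus, opp; simpl; ring) end.
    split.
    - revert H1. apply is_series_ext. intros k.
      change (fst (Cpow (RtoC s) k * a k - Cpow (RtoC s) k * b k)%C = s ^ k * (fst (a k) - fst (b k))).
      rewrite Cpow_RtoC_aux. simpl. ring.
    - revert H2. apply is_series_ext. intros k.
      change (snd (Cpow (RtoC s) k * a k - Cpow (RtoC s) k * b k)%C = s ^ k * (snd (a k) - snd (b k))).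
      rewrite Cpow_RtoC_aux. simpl. ring. }
  intros n.
  assert (R1 := real_coef_zero (fun k => fst (a k) - fst (b k)) rho Hrho
     (fun s Hs => to_pseries _ s (proj1 (K s Hs))) n).
  assert (R2 := real_coef_zero (fun k => snd (a k) - snd (b k)) rho Hrho
     (fun s Hs => to_pseries _ s (proj2 (K s Hs))) n).
  simpl in R1, R2. apply injective_projections; lra.
Qed.

Lemma roots_mod_half h i : (2 <= h)%nat -> (i <= h)%nat -> 1/2 <= Cmod (root_r h i).
Proof.
  intros Hh Hi. destruct (Nat.eq_dec i h) as [->|Hne].
  - destruct (root_h_real h Hh) as [rho [E Hr]]. rewrite E, Cmod_R, Rabs_pos_eq; lra.
  - assert (H := root_j_mod h i Hh ltac:(lia)). lra.
Qed.

Theorem mainTheorem2 (h : nat) (Hh : (2 <= h)%nat) :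
  (* the defining series converge *)
  (@ex_series C_AbsRing C_NormedModule
     (Bterm (INR h + 1) 1 (RtoC (1 / 2 ^ (h + 1))))) /\
  (forall j : nat, (j < h)%nat ->
     @ex_series C_AbsRing C_NormedModule
       (Bterm ((INR h + 1) / INR h) (- (1 / INR h))
          (Cpow (zeta h) j * RtoC (Rpower (1/2) ((INR h + 1) / INR h)))%C)) /\
  (* 1 - 2z + z^(h+1) = prod_{i=0}^h (z - r_i) *)
  (forall z : C,
     (RtoC 1 - RtoC 2 * z + Cpow z (h + 1))%C
     = cprod (fun i => (z - root_r h i)%C) (h + 1)) /\
  (* [z^n] 1/(1 - 2z + z^(h+1)) = - sum_i r_i^{-(n+1)} prod_{j<>i} (r_i - r_j)^{-1} *)
  (exists a : nat -> C,
     is_expansion_at0 (fun z => / (RtoC 1 - RtoC 2 * z + Cpow z (h + 1)))%C a) /\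
  (forall a : nat -> C,
     is_expansion_at0 (fun z => / (RtoC 1 - RtoC 2 * z + Cpow z (h + 1)))%C a ->
     forall n : nat,
       a n = (- csum (fun i =>
                 / Cpow (root_r h i) (n + 1) *
                 cprod (fun j => if Nat.eqb j i then RtoC 1
                                 else / (root_r h i - root_r h j)) (h + 1))
               (h + 1))%C).
Proof.
  assert (Fact : forall z : C, (RtoC 1 - RtoC 2 * z + Cpow z (h + 1))%C
     = cprod (fun i => (z - root_r h i)%C) (h + 1)).
  { apply factorization. lia.
    - intros i j Hi Hj Hij. apply roots_distinct; auto.
    - intros i Hi. apply root_is_root; auto. }
  assert (Exp : forall z, Cmod z < 1/2 ->
     @is_pseries C_AbsRing C_NormedModule (bcoef (root_r h) h) z
        ((fun z => / (RtoC 1 - RtoC 2 * z + Cpow z (h + 1)))%C z)).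
  { intros z Hz. simpl. rewrite Fact. apply (expansion_generic (root_r h) h (1/2)).
    - lra.
    - intros i Hi. apply roots_mod_half; auto.
    - intros i j Hi Hj Hij. apply roots_distinct; auto.
    - exact Hz. }
  split; [|split; [|split; [|split]]].
  - destruct (caseA_conv h Hh) as [Hac _].
    apply (AC_ex (Bcoef (INR h + 1) 1)).
    rewrite Cmod_R, Rabs_pos_eq by (apply Rlt_le, Rdiv_lt_0_compat; [lra | apply pow_lt; lra]).
    eapply AC_ext; [|exact Hac]. intros n. symmetry. apply Bcoef_A.
    intros m. assert (0 <= INR h) by apply pos_INR. assert (0 <= INR m) by apply pos_INR. rewrite S_INR. nra.
  - intros j Hj. apply (AC_ex (Bcoef (tB h) (rB h))).
    change (Cpow (zeta h) j * RtoC (Rpower (1 / 2) ((INR h + 1) / INR h)))%C with (xj h j).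
    rewrite Cmod_xj. eapply AC_ext; [|apply AC_yB; auto]. intros n. symmetry. apply Bcoef_A.
    apply tB_rB_nz. lia.
  - exact Fact.
  - exists (bcoef (root_r h) h). exists (1/2). split. lra. exact Exp.
  - intros a [rho [Hrho Ha]] n.
    assert (U := pseries_unique_C a (bcoef (root_r h) h) (Rmin rho (1/2))
       (fun z => / (RtoC 1 - RtoC 2 * z + Cpow z (h + 1)))%C
       ltac:(apply Rmin_glb_lt; lra)
       (fun z Hz => Ha z (Rlt_le_trans _ _ _ Hz (Rmin_l _ _)))
       (fun z Hz => Exp z (Rlt_le_trans _ _ _ Hz (Rmin_r _ _))) n).
    rewrite U. unfold bcoef, wgt. reflexivity.
Qed.
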